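(* Let $h:S\to S$ be a homeomorphism of the Riemann sphere $S=\mathbb{C}\cup\{\infty\}$ with $h(\infty)=\infty$, and suppose there are nice lattices $\Gamma_1,\Gamma_2$ with $h\Gamma_1h^{-1}=\Gamma_2$ (for the boundary actions). If the restriction of $h$ to $\mathbb{C}\cong\mathbb{R}^2$ is a real affine transformation, then $h\in\mathcal{I}$, i.e. $h$ is a conformal transformation of $S$.
   Context: $\mathcal{I}$ denotes the isometry group of hyperbolic $3$-space $\mathbb{H}^3=\mathbb{C}\times(0,\infty)$; each isometry extends to a conformal transformation of $S$ (a homeomorphism of $S$ mapping generalized circles — round circles in $\mathbb{C}$ and sets $L\cup\{\infty\}$ with $L$ a line — to generalized circles), every conformal transformation arises this way, and we identify $\mathcal{I}$ with the group of conformal transformations of $S$. A nice lattice is a subgroup $\Gamma\subset\mathcal{I}$ acting freely, properly discontinuously and cocompactly on $\mathbb{H}^3$. A real affine transformation of $\mathbb{C}=\mathbb{R}^2$ is a map $v\mapsto T(v)+w$ with $T$ an invertible real-linear map and $w\in\mathbb{C}$. *)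

(* Defs.v *)
From Stdlib Require Import Reals List.
Open Scope R_scope.

(** The complex plane as R^2 and the Riemann sphere S = C ∪ {∞}
    (None = ∞). *)
Definition C2 : Type := (R * R)%type.
Definition S : Type := option C2.

Definition cnorm (p : C2) : R := sqrt (fst p ^ 2 + snd p ^ 2).
Definition cdist (p q : C2) : R := cnorm (fst p - fst q, snd p - snd q).

(** Sequential convergence in S (S is metrizable, so this determines
    its topology). *)
Definition conv_S (s : nat -> S) (z : S) : Prop :=
  match z with
  | Some c => forall eps, 0 < eps -> exists N, forall n, (N <= n)%nat ->
                 exists p, s n = Some p /\ cdist p c < eps
  | None => forall M, exists N, forall n, (N <= n)%nat ->
                 s n = None \/ exists p, s n = Some p /\ M < cnorm p
  end.

Definition continuous_S (h : S -> S) : Prop :=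
  forall s z, conv_S s z -> conv_S (fun n => h (s n)) (h z).

Definition homeomorphism_S (h : S -> S) : Prop :=
  exists hinv : S -> S,
    (forall z, hinv (h z) = z) /\ (forall z, h (hinv z) = z) /\
    continuous_S h /\ continuous_S hinv.

Definition gen_circle (A : S -> Prop) : Prop :=
  (exists (c : C2) (r : R), 0 < r /\
     forall z, A z <-> exists p, z = Some p /\ cdist p c = r)
  \/
  (exists a b g : R, (a <> 0 \/ b <> 0) /\
     forall z, A z <-> (z = None \/ exists p, z = Some p /\ a * fst p + b * snd p = g)).

Definition conformal (h : S -> S) : Prop :=
  homeomorphism_S h /\
  forall A, gen_circle A -> gen_circle (fun w => exists z, A z /\ h z = w).

Definition H3 : Type := {p : (R * R) * R | 0 < snd p}.

Definition hx (p : H3) : R := fst (fst (proj1_sig p)).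
Definition hy (p : H3) : R := snd (fst (proj1_sig p)).
Definition ht (p : H3) : R := snd (proj1_sig p).

(** cosh of the hyperbolic distance, and the distance (arcosh). *)
Definition hcosh (p q : H3) : R :=
  1 + ((hx p - hx q) ^ 2 + (hy p - hy q) ^ 2 + (ht p - ht q) ^ 2)
      / (2 * ht p * ht q).
Definition hdist (p q : H3) : R :=
  let u := hcosh p q in ln (u + sqrt (u ^ 2 - 1)).

Definition isometry (g : H3 -> H3) : Prop :=
  (forall p q, hdist (g p) (g q) = hdist p q) /\ (forall q, exists p, g p = q).

Definition hopen (U : H3 -> Prop) : Prop :=
  forall p, U p -> exists e, 0 < e /\ forall q, hdist p q < e -> U q.

Definition hcompact (K : H3 -> Prop) : Prop :=
  forall (I : Type) (U : I -> H3 -> Prop),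
    (forall i, hopen (U i)) -> (forall p, K p -> exists i, U i p) ->
    exists l : list I, forall p, K p -> exists i, In i l /\ U i p.

(** Nice lattice: a subgroup of Isom(H^3) acting freely, properly
    discontinuously and cocompactly. *)
Definition nice_lattice (G : (H3 -> H3) -> Prop) : Prop :=
  (forall g, G g -> isometry g) /\
  G (fun p => p) /\
  (forall g1 g2, G g1 -> G g2 -> G (fun p => g1 (g2 p))) /\
  (forall g, G g -> exists g', G g' /\ (forall p, g (g' p) = p) /\ (forall p, g' (g p) = p)) /\
  (forall g p, G g -> g p = p -> forall q, g q = q) /\
  (forall K, hcompact K -> exists l : list (H3 -> H3),
      forall g, G g -> (exists p, K p /\ K (g p)) ->
        exists g', In g' l /\ forall q, g q = g' q) /\
  (exists K, hcompact K /\ forall p, exists g q, G g /\ K q /\ g q = p).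

(** Convergence of points of H^3 to a point of the boundary S
    (topology of the closed half-space compactified at ∞). *)
Definition conv_bd (x : nat -> H3) (z : S) : Prop :=
  match z with
  | Some c => Un_cv (fun n => hx (x n)) (fst c) /\ Un_cv (fun n => hy (x n)) (snd c)
              /\ Un_cv (fun n => ht (x n)) 0
  | None => forall M, exists N, forall n, (N <= n)%nat ->
              M < cnorm (hx (x n), hy (x n)) + ht (x n)
  end.

Definition boundary_map (g : H3 -> H3) (f : S -> S) : Prop :=
  forall z x, conv_bd x z -> conv_bd (fun n => g (x n)) (f z).

Definition conj_lattices (h : S -> S) (G1 G2 : (H3 -> H3) -> Prop) : Prop :=
  (forall g1, G1 g1 -> exists g2 f1 f2, G2 g2 /\ boundary_map g1 f1 /\
       boundary_map g2 f2 /\ forall z, f2 (h z) = h (f1 z)) /\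
  (forall g2, G2 g2 -> exists g1 f1 f2, G1 g1 /\ boundary_map g1 f1 /\
       boundary_map g2 f2 /\ forall z, f2 (h z) = h (f1 z)).

Definition real_affine_on_C (h : S -> S) : Prop :=
  exists a b c d e f : R, a * d - b * c <> 0 /\
    forall x y, h (Some (x, y)) = Some (a * x + b * y + e, c * x + d * y + f).

(* Main.v *)
Require Import Defs.
From Stdlib Require Import Reals List Lra Lia Psatz FunctionalExtensionality ProofIrrelevance Classical ZArith.
Open Scope R_scope.

Lemma ht_pos (p : H3) : 0 < ht p.
Proof. unfold ht. exact (proj2_sig p). Qed.

Definition aa (p q : H3) : R :=
  (hx p - hx q)^2 + (hy p - hy q)^2 + ht p ^2 + ht q ^2.

Lemma hcosh_aa p q : 2 * hcosh p q * (ht p * ht q) = aa p q.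
Proof.
  pose proof (ht_pos p); pose proof (ht_pos q).
  unfold hcosh, aa. field. lra.
Qed.

Lemma hcosh_ge1 p q : 1 <= hcosh p q.
Proof.
  pose proof (ht_pos p); pose proof (ht_pos q).
  unfold hcosh.
  assert (0 <= ((hx p - hx q) ^ 2 + (hy p - hy q) ^ 2 + (ht p - ht q) ^ 2)
      / (2 * ht p * ht q)).
  { unfold Rdiv. apply Rmult_le_pos. pose proof (pow2_ge_0 (hx p - hx q)); pose proof (pow2_ge_0 (hy p - hy q)); pose proof (pow2_ge_0 (ht p - ht q)); lra. left; apply Rinv_0_lt_compat; nra. }
  lra.
Qed.

Lemma arc_pos u : 1 <= u -> 0 < u + sqrt (u^2 - 1).
Proof. intros. pose proof (sqrt_pos (u^2-1)). lra. Qed.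

Lemma arc_inj u v : 1 <= u -> 1 <= v ->
  ln (u + sqrt (u^2 - 1)) = ln (v + sqrt (v^2 - 1)) -> u = v.
Proof.
  intros Hu Hv H. apply ln_inv in H; try apply arc_pos; auto.
  destruct (Rtotal_order u v) as [Hl|[He|Hl]]; auto.
  - assert (sqrt (u^2-1) <= sqrt (v^2-1)) by (apply sqrt_le_1_alt; nra). lra.
  - assert (sqrt (v^2-1) <= sqrt (u^2-1)) by (apply sqrt_le_1_alt; nra). lra.
Qed.

Lemma iso_hcosh g p q : isometry g -> hcosh (g p) (g q) = hcosh p q.
Proof.
  intros [Hd _]. specialize (Hd p q). unfold hdist in Hd.
  apply arc_inj; auto using hcosh_ge1.
Qed.

Lemma iso_aa g p q : isometry g ->
  aa (g p) (g q) * (ht p * ht q) = aa p q * (ht (g p) * ht (g q)).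
Proof.
  intros Hg. rewrite <- !hcosh_aa. rewrite (iso_hcosh g p q Hg). ring.
Qed.

Lemma exp_hdist p q : exp (hdist p q) = hcosh p q + sqrt (hcosh p q ^2 - 1).
Proof. unfold hdist. rewrite exp_ln; auto using arc_pos, hcosh_ge1. Qed.

Lemma hcosh_le_exp p q : hcosh p q <= exp (hdist p q).
Proof. rewrite exp_hdist. pose proof (sqrt_pos (hcosh p q ^2 - 1)). lra. Qed.

Definition mkH (x y t : R) (H : 0 < t) : H3 := exist _ ((x,y),t) H.

Lemma H3_eq (p q : H3) : hx p = hx q -> hy p = hy q -> ht p = ht q -> p = q.
Proof.
  destruct p as [[[a b] c] Hp], q as [[[a' b'] c'] Hq]; unfold hx, hy, ht; simpl.
  intros -> -> ->. f_equal. apply proof_irrelevance.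
Qed.

Lemma nat_unbounded M : exists N : nat, M < INR N.
Proof.
  destruct (archimed M) as [H _].
  destruct (Z.lt_ge_cases (up M) 0) as [Hn|Hp].
  - exists 0%nat. simpl. apply IZR_lt in Hn. lra.
  - exists (Z.to_nat (up M)). rewrite INR_IZR_INZ, Z2Nat.id; auto.
Qed.

Lemma cv_ev (u : nat -> R) l e : Un_cv u l -> 0 < e ->
  exists N, forall n, (N <= n)%nat -> Rabs (u n - l) < e.
Proof.
  intros H He. destruct (H e He) as [N HN]. exists N. intros n Hn.
  specialize (HN n Hn). unfold Rdist, R_dist in HN. exact HN.
Qed.

Lemma cv_const c : Un_cv (fun _ => c) c.
Proof. intros e He. exists 0%nat. intros. unfold Rdist, R_dist. rewrite Rminus_diag, Rabs_R0. lra. Qed.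

Lemma cv_inv_S : Un_cv (fun n => / INR (Datatypes.S n)) 0.
Proof.
  intros e He. destruct (nat_unbounded (/ e)) as [N HN]. exists N. intros n Hn.
  unfold Rdist, R_dist. rewrite Rminus_0_r.
  assert (HS: INR N <= INR (Datatypes.S n)) by (apply le_INR; lia).
  assert (0 < INR (Datatypes.S n)) by (apply lt_0_INR; lia).
  rewrite Rabs_pos_eq by (left; apply Rinv_0_lt_compat; lra).
  assert (0 < / e) by (apply Rinv_0_lt_compat; lra).
  rewrite <- (Rinv_inv e).
  apply Rinv_lt_contravar; nra.
Qed.

Lemma cnorm_le x y : cnorm (x,y) <= Rabs x + Rabs y.
Proof.
  unfold cnorm; simpl.
  pose proof (Rabs_pos x); pose proof (Rabs_pos y).
  rewrite <- (sqrt_pow2 (Rabs x + Rabs y)) by lra.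
  apply sqrt_le_1_alt. simpl. pose proof (pow2_abs x) as Ex; pose proof (pow2_abs y) as Ey; simpl in Ex, Ey. nra.
Qed.

Lemma cnorm_sq x y : cnorm (x,y) ^ 2 = x^2 + y^2.
Proof. unfold cnorm; simpl. apply pow2_sqrt. nra. Qed.

Lemma cnorm_pos p : 0 <= cnorm p.
Proof. apply sqrt_pos. Qed.

Definition seqS (c : C2) : nat -> H3 :=
  fun n => mkH (fst c) (snd c) (/ INR (Datatypes.S n))
             (Rinv_0_lt_compat _ (lt_0_INR _ (Nat.lt_0_succ n))).

Definition seqI : nat -> H3 :=
  fun n => mkH 0 0 (INR (Datatypes.S n)) (lt_0_INR _ (Nat.lt_0_succ n)).

Lemma conv_seqS c : conv_bd (seqS c) (Some c).
Proof.
  destruct c as [a b]. simpl. unfold seqS, hx, hy, ht; simpl.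
  split; [|split]; [apply cv_const|apply cv_const|apply cv_inv_S].
Qed.

Lemma conv_seqI : conv_bd seqI None.
Proof.
  simpl. intros M. destruct (nat_unbounded M) as [N HN]. exists N. intros n Hn.
  unfold seqI, hx, hy, ht, mkH; cbn [proj1_sig fst snd].
  assert (INR N <= INR (Datatypes.S n)) by (apply le_INR; lia).
  pose proof (cnorm_pos (0,0)). lra.
Qed.

Lemma seq_exists z : exists x, conv_bd x z.
Proof. destruct z as [c|]. exists (seqS c); apply conv_seqS. exists seqI; apply conv_seqI. Qed.

Lemma conv_bd_fin_bounded x c : conv_bd x (Some c) ->
  exists N, forall n, (N <= n)%nat -> cnorm (hx (x n), hy (x n)) + ht (x n) < Rabs (fst c) + Rabs (snd c) + 3.
Proof.
  intros [H1 [H2 H3]].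
  destruct (cv_ev _ _ 1 H1) as [N1 HN1]; [lra|].
  destruct (cv_ev _ _ 1 H2) as [N2 HN2]; [lra|].
  destruct (cv_ev _ _ 1 H3) as [N3 HN3]; [lra|].
  exists (N1 + N2 + N3)%nat. intros n Hn.
  specialize (HN1 n ltac:(lia)); specialize (HN2 n ltac:(lia)); specialize (HN3 n ltac:(lia)).
  pose proof (cnorm_le (hx (x n)) (hy (x n))).
  rewrite Rminus_0_r in HN3.
  assert (Rabs (hx (x n)) <= Rabs (hx (x n) - fst c) + Rabs (fst c)).
  { replace (hx (x n)) with ((hx (x n) - fst c) + fst c) at 1 by ring. apply Rabs_triang. }
  assert (Rabs (hy (x n)) <= Rabs (hy (x n) - snd c) + Rabs (snd c)).
  { replace (hy (x n)) with ((hy (x n) - snd c) + snd c) at 1 by ring. apply Rabs_triang. }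
  pose proof (Rle_abs (ht (x n))). lra.
Qed.

Lemma conv_bd_unique x z1 z2 : conv_bd x z1 -> conv_bd x z2 -> z1 = z2.
Proof.
  intros H1 H2. destruct z1 as [c1|], z2 as [c2|].
  - destruct c1 as [a1 b1], c2 as [a2 b2]. destruct H1 as [Ha1 [Hb1 _]], H2 as [Ha2 [Hb2 _]].
    simpl in *. f_equal. f_equal; eapply UL_sequence; eauto.
  - exfalso. destruct (conv_bd_fin_bounded _ _ H1) as [N HN].
    destruct (H2 (Rabs (fst c1) + Rabs (snd c1) + 3)) as [N' HN'].
    specialize (HN (N+N')%nat ltac:(lia)). specialize (HN' (N+N')%nat ltac:(lia)). lra.
  - exfalso. destruct (conv_bd_fin_bounded _ _ H2) as [N HN].
    destruct (H1 (Rabs (fst c2) + Rabs (snd c2) + 3)) as [N' HN'].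
    specialize (HN (N+N')%nat ltac:(lia)). specialize (HN' (N+N')%nat ltac:(lia)). lra.
  - reflexivity.
Qed.

Lemma bmap_inverse g g' f f' : boundary_map g f -> boundary_map g' f' ->
  (forall p, g (g' p) = p) -> forall z, f (f' z) = z.
Proof.
  intros Hf Hf' Hgg z. destruct (seq_exists z) as [x Hx].
  pose proof (Hf _ _ (Hf' _ _ Hx)) as H. simpl in H.
  replace (fun n => g (g' (x n))) with x in H by (apply functional_extensionality; intros; rewrite Hgg; auto).
  eapply conv_bd_unique; eauto.
Qed.
Lemma core (xP yP sP xQ yQ sQ xR yR sR B e : R) :
  0 < e -> e <= 1 -> 1 <= B ->
  Rabs xP <= B -> Rabs yP <= B -> Rabs sP <= B ->
  Rabs xQ <= B -> Rabs yQ <= B -> Rabs sQ <= B -> 0 < sR ->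
  48 * B / e + 6 < Rabs xR + Rabs yR + sR ->
  Rabs (((xP - xR)^2 + (yP-yR)^2 + sP^2 + sR^2) - ((xQ - xR)^2 + (yQ-yR)^2 + sQ^2 + sR^2))
   < e * ((xQ - xR)^2 + (yQ-yR)^2 + sQ^2 + sR^2).
Proof.
  intros He He1 HB H1 H2 H3 H4 H5 H6 HsR HT.
  set (T := Rabs xR + Rabs yR + sR) in *.
  assert (HT2 : 48 * B + 6 * e < e * T).
  { apply (Rmult_lt_compat_l e) in HT; auto. unfold Rdiv in HT.
    replace (e * (48 * B * / e + 6)) with (48 * B + 6*e) in HT by (field; lra). lra. }
  assert (Hc1 : Rabs (xR * (xP - xQ)) <= 2 * B * Rabs xR).
  { rewrite Rabs_mult. pose proof (Rabs_triang xP (-xQ)). rewrite Rabs_Ropp in H.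
    pose proof (Rabs_pos xR). unfold Rminus. nra. }
  assert (Hc2 : Rabs (yR * (yP - yQ)) <= 2 * B * Rabs yR).
  { rewrite Rabs_mult. pose proof (Rabs_triang yP (-yQ)). rewrite Rabs_Ropp in H.
    pose proof (Rabs_pos yR). unfold Rminus. nra. }
  assert (Eq : ((xP - xR)^2 + (yP-yR)^2 + sP^2 + sR^2) - ((xQ - xR)^2 + (yQ-yR)^2 + sQ^2 + sR^2)
     = (xP^2 + yP^2 + sP^2 - xQ^2 - yQ^2 - sQ^2) - 2 * (xR * (xP - xQ)) - 2 * (yR * (yP - yQ))) by ring.
  rewrite Eq.
  assert (Hsq : forall z, Rabs z <= B -> z^2 <= B^2).
  { intros z Hz. rewrite <- (pow2_abs z). pose proof (Rabs_pos z). nra. }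
  pose proof (Hsq _ H1); pose proof (Hsq _ H2); pose proof (Hsq _ H3);
  pose proof (Hsq _ H4); pose proof (Hsq _ H5); pose proof (Hsq _ H6).
  assert (Hfirst : Rabs (xP^2 + yP^2 + sP^2 - xQ^2 - yQ^2 - sQ^2) <= 3 * B^2).
  { pose proof (pow2_ge_0 xP); pose proof (pow2_ge_0 yP); pose proof (pow2_ge_0 sP);
    pose proof (pow2_ge_0 xQ); pose proof (pow2_ge_0 yQ); pose proof (pow2_ge_0 sQ).
    apply Rabs_le; lra. }
  assert (Hlhs : Rabs ((xP^2 + yP^2 + sP^2 - xQ^2 - yQ^2 - sQ^2) - 2 * (xR * (xP - xQ)) - 2 * (yR * (yP - yQ)))
     <= 3 * B^2 + 4 * B * (Rabs xR + Rabs yR)).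
  { set (F := xP^2 + yP^2 + sP^2 - xQ^2 - yQ^2 - sQ^2) in *. unfold Rminus in *. eapply Rle_trans. apply Rabs_triang. rewrite Rabs_Ropp.
    eapply Rle_trans. apply Rplus_le_compat_r. apply Rabs_triang. rewrite Rabs_Ropp.
    assert (E2 : forall X, Rabs (2 * X) = 2 * Rabs X) by (intros; rewrite Rabs_mult, (Rabs_pos_eq 2) by lra; auto).
    rewrite !E2. lra. }
  assert (HxQ : xR^2 / 2 - xQ^2 <= (xQ - xR)^2) by (pose proof (pow2_ge_0 (xQ - xR/2)); nra).
  assert (HyQ : yR^2 / 2 - yQ^2 <= (yQ - yR)^2) by (pose proof (pow2_ge_0 (yQ - yR/2)); nra).
  assert (HTsq : T^2 <= 3 * (xR^2 + yR^2 + sR^2)).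
  { unfold T. rewrite <- (pow2_abs xR), <- (pow2_abs yR). pose proof (pow2_ge_0 (Rabs xR - Rabs yR)); pose proof (pow2_ge_0 (Rabs xR - sR)); pose proof (pow2_ge_0 (Rabs yR - sR)). nra. }
  assert (HaQ : T^2 / 6 - 2 * B^2 <= (xQ - xR)^2 + (yQ-yR)^2 + sQ^2 + sR^2).
  { pose proof (pow2_ge_0 sQ). pose proof (pow2_ge_0 sR). lra. }
  assert (HT0 : 0 <= T) by (unfold T; pose proof (Rabs_pos xR); pose proof (Rabs_pos yR); lra).
  assert (Hu : Rabs xR + Rabs yR <= T) by (unfold T; lra).
  apply Rle_lt_trans with (3 * B^2 + 4 * B * T). { nra. }
  apply Rlt_le_trans with (e * (T^2/6 - 2*B^2)); [|nra].
  assert (HT3 : 48 * B < T) by nra.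
  assert (HT4 : T * (48 * B + 6 * e) < T * (e * T)) by (apply Rmult_lt_compat_l; lra).
  assert (HB2 : e * B^2 <= B^2) by nra.
  assert (HB3 : 48 * B^2 < B * T) by nra.
  replace (e * (T^2/6 - 2*B^2)) with (T * (e * T) / 6 - 2 * (e * B^2)) by (field).
  nra.
Qed.

Definition dd (p q : C2) : R := (fst p - fst q)^2 + (snd p - snd q)^2.

Definition evbd (P : nat -> H3) := exists B N, 1 <= B /\ forall n, (N <= n)%nat ->
  Rabs (hx (P n)) <= B /\ Rabs (hy (P n)) <= B /\ Rabs (ht (P n)) <= B.

Lemma cv_bound (u : nat -> R) l : Un_cv u l -> exists N, forall n, (N <= n)%nat -> Rabs (u n) <= Rabs l + 1.
Proof.
  intros H. destruct (cv_ev u l 1 H) as [N HN]; [lra|]. exists N. intros n Hn.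
  specialize (HN n Hn).
  replace (u n) with ((u n - l) + l) by ring. eapply Rle_trans. apply Rabs_triang. lra.
Qed.

Lemma evbd_cv P a b c : Un_cv (fun n => hx (P n)) a -> Un_cv (fun n => hy (P n)) b ->
  Un_cv (fun n => ht (P n)) c -> evbd P.
Proof.
  intros H1 H2 H3. destruct (cv_bound _ _ H1) as [N1 HN1].
  destruct (cv_bound _ _ H2) as [N2 HN2]. destruct (cv_bound _ _ H3) as [N3 HN3].
  exists (Rabs a + Rabs b + Rabs c + 1), (N1+N2+N3)%nat.
  pose proof (Rabs_pos a); pose proof (Rabs_pos b); pose proof (Rabs_pos c).
  split; [lra|]. intros n Hn.
  specialize (HN1 n ltac:(lia)); specialize (HN2 n ltac:(lia)); specialize (HN3 n ltac:(lia)).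
  repeat split; lra.
Qed.

Lemma evbd_fin P c : conv_bd P (Some c) -> evbd P.
Proof. intros [H1 [H2 H3]]. eapply evbd_cv; eauto. Qed.

Lemma evbd_const x : evbd (fun _ => x).
Proof. eapply evbd_cv; apply cv_const. Qed.

Lemma aa_pos p q : 0 < aa p q.
Proof. unfold aa. pose proof (ht_pos p). pose proof (pow2_ge_0 (hx p - hx q)).
  pose proof (pow2_ge_0 (hy p - hy q)). pose proof (pow2_ge_0 (ht q)). nra. Qed.

Lemma ratio_cv P Q R : evbd P -> evbd Q -> conv_bd R None ->
  Un_cv (fun n => aa (P n) (R n) / aa (Q n) (R n)) 1.
Proof.
  intros [B1 [N1 [HB1 HP]]] [B2 [N2 [HB2 HQ]]] HR e He.
  set (e' := Rmin e 1).
  assert (He' : 0 < e') by (unfold e'; apply Rmin_glb_lt; lra).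
  assert (He1 : e' <= 1) by (unfold e'; apply Rmin_r).
  assert (He2 : e' <= e) by (unfold e'; apply Rmin_l).
  set (B := Rmax B1 B2).
  assert (B1 <= B) by apply Rmax_l. assert (B2 <= B) by apply Rmax_r.
  destruct (HR (48 * B / e' + 6)) as [N3 HN3].
  exists (N1 + N2 + N3)%nat. intros n Hn.
  destruct (HP n ltac:(lia)) as [Px [Py Ps]]. destruct (HQ n ltac:(lia)) as [Qx [Qy Qs]].
  specialize (HN3 n ltac:(lia)).
  pose proof (cnorm_le (hx (R n)) (hy (R n))).
  pose proof (core (hx (P n)) (hy (P n)) (ht (P n)) (hx (Q n)) (hy (Q n)) (ht (Q n))
     (hx (R n)) (hy (R n)) (ht (R n)) B e' He' He1 ltac:(lra) ltac:(lra) ltac:(lra) ltac:(lra)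
     ltac:(lra) ltac:(lra) ltac:(lra) (ht_pos _) ltac:(lra)) as Hc.
  fold (aa (P n) (R n)) (aa (Q n) (R n)) in Hc.
  pose proof (aa_pos (Q n) (R n)) as HaQ.
  unfold Rdist, R_dist.
  replace (aa (P n) (R n) / aa (Q n) (R n) - 1) with ((aa (P n) (R n) - aa (Q n) (R n)) / aa (Q n) (R n)) by (field; lra).
  unfold Rdiv. rewrite Rabs_mult, (Rabs_pos_eq (/ _)) by (left; apply Rinv_0_lt_compat; lra).
  apply Rlt_le_trans with e'; [|lra].
  apply (Rmult_lt_reg_r (aa (Q n) (R n))); auto.
  rewrite Rmult_assoc, Rinv_l by lra. lra.
Qed.

Lemma cv_ext (u v : nat -> R) l : (forall n, u n = v n) -> Un_cv u l -> Un_cv v l.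
Proof. intros E H e He. destruct (H e He) as [N HN]. exists N. intros n Hn. rewrite <- E. auto. Qed.

Lemma cv_sq (u : nat -> R) l : Un_cv u l -> Un_cv (fun n => u n ^ 2) (l ^ 2).
Proof.
  intros H. replace (l^2) with (l * l) by ring. apply cv_ext with (fun n => u n * u n).
  intros; ring. apply CV_mult; auto.
Qed.

Lemma aa_cv P Q a b c d : conv_bd P (Some (a,b)) -> conv_bd Q (Some (c,d)) ->
  Un_cv (fun n => aa (P n) (Q n)) (dd (a,b) (c,d)).
Proof.
  intros [H1 [H2 H3]] [H4 [H5 H6]]. cbn [fst snd] in *. unfold dd, aa; cbn [fst snd].
  replace ((a - c) ^ 2 + (b - d) ^ 2) with ((a - c) ^ 2 + (b - d) ^ 2 + 0^2 + 0^2) by ring.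
  apply CV_plus; [apply CV_plus; [apply CV_plus|]|]; apply cv_sq; try apply CV_minus; auto.
Qed.

Lemma four_id (A13 A24 A14 A23 C13 C24 C14 C23 s1 s2 s3 s4 t1 t2 t3 t4 : R) :
  0 < s1 -> 0 < s2 -> 0 < s3 -> 0 < s4 ->
  C13 * (s1 * s3) = A13 * (t1 * t3) ->
  C24 * (s2 * s4) = A24 * (t2 * t4) ->
  C14 * (s1 * s4) = A14 * (t1 * t4) ->
  C23 * (s2 * s3) = A23 * (t2 * t3) ->
  C13 * C24 * A14 * A23 = A13 * A24 * C14 * C23.
Proof.
  intros H1 H2 H3 H4 E1 E2 E3 E4.
  assert (P : 0 < s1 * s2 * s3 * s4) by (repeat apply Rmult_lt_0_compat; auto).
  apply (Rmult_eq_reg_r (s1 * s2 * s3 * s4)); [|lra].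
  transitivity ((C13 * (s1 * s3)) * (C24 * (s2 * s4)) * A14 * A23); [ring|].
  rewrite E1, E2.
  transitivity (A13 * A24 * ((C14 * (s1 * s4)) * (C23 * (s2 * s3)))); [|ring].
  rewrite E3, E4. ring.
Qed.

Lemma cr_inf g f z1 z2 z3 q w1 w2 w3 : isometry g -> boundary_map g f ->
  f (Some z1) = Some w1 -> f (Some z2) = Some w2 -> f (Some z3) = Some w3 ->
  f (Some q) = None ->
  dd w1 w3 * dd z1 q * dd z2 z3 = dd z1 z3 * dd z2 q * dd w2 w3.
Proof.
  intros Hg Hf E1 E2 E3 E4.
  pose proof (Hf _ _ (conv_seqS z1)) as Y1. rewrite E1 in Y1.
  pose proof (Hf _ _ (conv_seqS z2)) as Y2. rewrite E2 in Y2.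
  pose proof (Hf _ _ (conv_seqS z3)) as Y3. rewrite E3 in Y3.
  pose proof (Hf _ _ (conv_seqS q)) as Y4. rewrite E4 in Y4.
  set (x1 := seqS z1) in *. set (x2 := seqS z2) in *. set (x3 := seqS z3) in *. set (x4 := seqS q) in *.
  pose proof (conv_seqS z1) as X1; pose proof (conv_seqS z2) as X2;
  pose proof (conv_seqS z3) as X3; pose proof (conv_seqS q) as X4. fold x1 x2 x3 x4 in X1, X2, X3, X4.
  set (L := fun n => aa (g (x1 n)) (g (x3 n)) * (aa (g (x2 n)) (g (x4 n)) / aa (g (x1 n)) (g (x4 n)))
                      * aa (x1 n) (x4 n) * aa (x2 n) (x3 n)).
  set (Rr := fun n => aa (x1 n) (x3 n) * aa (x2 n) (x4 n) * aa (g (x2 n)) (g (x3 n))).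
  assert (EQ : forall n, L n = Rr n).
  { intros n. unfold L, Rr.
    pose proof (four_id (aa (x1 n) (x3 n)) (aa (x2 n) (x4 n)) (aa (x1 n) (x4 n)) (aa (x2 n) (x3 n))
      (aa (g (x1 n)) (g (x3 n))) (aa (g (x2 n)) (g (x4 n))) (aa (g (x1 n)) (g (x4 n))) (aa (g (x2 n)) (g (x3 n)))
      (ht (x1 n)) (ht (x2 n)) (ht (x3 n)) (ht (x4 n))
      (ht (g (x1 n))) (ht (g (x2 n))) (ht (g (x3 n))) (ht (g (x4 n)))
      (ht_pos _) (ht_pos _) (ht_pos _) (ht_pos _)
      (iso_aa _ _ _ Hg) (iso_aa _ _ _ Hg) (iso_aa _ _ _ Hg) (iso_aa _ _ _ Hg)) as H.
    pose proof (aa_pos (g (x1 n)) (g (x4 n))).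
    apply (Rmult_eq_reg_r (aa (g (x1 n)) (g (x4 n)))); [|lra].
    unfold Rdiv. transitivity (aa (g (x1 n)) (g (x3 n)) * aa (g (x2 n)) (g (x4 n)) * aa (x1 n) (x4 n) * aa (x2 n) (x3 n)
       * (aa (g (x1 n)) (g (x4 n)) * / aa (g (x1 n)) (g (x4 n)))); [ring|].
    rewrite Rinv_r by lra. rewrite Rmult_1_r, H. ring. }
  destruct z1 as [a1 b1], z2 as [a2 b2], z3 as [a3 b3], q as [a4 b4],
    w1 as [c1 d1], w2 as [c2 d2], w3 as [c3 d3].
  assert (CL : Un_cv L (dd (c1,d1) (c3,d3) * 1 * dd (a1,b1) (a4,b4) * dd (a2,b2) (a3,b3))).
  { unfold L. apply CV_mult; [apply CV_mult; [apply CV_mult|]|].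
    - apply (aa_cv (fun n => g (x1 n)) (fun n => g (x3 n))); auto.
    - apply ratio_cv; auto. eapply evbd_fin; eauto. eapply evbd_fin; eauto.
    - apply aa_cv; auto.
    - apply aa_cv; auto. }
  assert (CR : Un_cv Rr (dd (a1,b1) (a3,b3) * dd (a2,b2) (a4,b4) * dd (c2,d2) (c3,d3))).
  { unfold Rr. apply CV_mult; [apply CV_mult|].
    - apply aa_cv; auto.
    - apply aa_cv; auto.
    - apply (aa_cv (fun n => g (x2 n)) (fun n => g (x3 n))); auto. }
  assert (CL' : Un_cv Rr (dd (c1,d1) (c3,d3) * 1 * dd (a1,b1) (a4,b4) * dd (a2,b2) (a3,b3))).
  { eapply cv_ext; [|exact CL]. exact EQ. }
  pose proof (UL_sequence _ _ _ CL' CR). lra.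
Qed.

Lemma ht_ratio g f : isometry g -> boundary_map g f -> f None = None ->
  forall x1 x2, ht (g x1) * ht x2 = ht (g x2) * ht x1.
Proof.
  intros Hg Hf E x1 x2.
  pose proof (Hf _ _ conv_seqI) as Y. rewrite E in Y.
  set (L := fun n => aa (g x1) (g (seqI n)) / aa (g x2) (g (seqI n)) * (ht x1 * ht (g x2))).
  set (Rr := fun n => aa x1 (seqI n) / aa x2 (seqI n) * (ht (g x1) * ht x2)).
  assert (EQ : forall n, L n = Rr n).
  { intros n. unfold L, Rr.
    pose proof (iso_aa g x1 (seqI n) Hg). pose proof (iso_aa g x2 (seqI n) Hg).
    pose proof (aa_pos (g x2) (g (seqI n))). pose proof (aa_pos x2 (seqI n)).
    pose proof (ht_pos x1). pose proof (ht_pos x2). pose proof (ht_pos (seqI n)).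
    pose proof (ht_pos (g x1)). pose proof (ht_pos (g x2)). pose proof (ht_pos (g (seqI n))).
    set (y := seqI n) in *.
    assert (A1 : aa (g x1) (g y) = aa x1 y * (ht (g x1) * ht (g y)) / (ht x1 * ht y)).
    { apply (Rmult_eq_reg_r (ht x1 * ht y)). 2: nra. rewrite H. field. lra. }
    assert (A2 : aa (g x2) (g y) = aa x2 y * (ht (g x2) * ht (g y)) / (ht x2 * ht y)).
    { apply (Rmult_eq_reg_r (ht x2 * ht y)). 2: nra. rewrite H0. field. lra. }
    rewrite A1, A2. field. repeat split; lra. }
  assert (CL : Un_cv L (1 * (ht x1 * ht (g x2)))).
  { unfold L. apply CV_mult. apply ratio_cv; auto using evbd_const. apply cv_const. }
  assert (CR : Un_cv Rr (1 * (ht (g x1) * ht x2))).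
  { unfold Rr. apply CV_mult. apply ratio_cv; auto using evbd_const, conv_seqI. apply cv_const. }
  assert (CL' : Un_cv Rr (1 * (ht x1 * ht (g x2)))) by (eapply cv_ext; [exact EQ|exact CL]).
  pose proof (UL_sequence _ _ _ CL' CR). lra.
Qed.

Lemma dd_ge0 p q : 0 <= dd p q.
Proof. unfold dd. pose proof (pow2_ge_0 (fst p - fst q)). pose proof (pow2_ge_0 (snd p - snd q)). lra. Qed.

Lemma dd_sym p q : dd p q = dd q p.
Proof. unfold dd. ring. Qed.

Lemma dd_refl p : dd p p = 0.
Proof. unfold dd. ring. Qed.

Lemma dd_zero p q : dd p q = 0 -> p = q.
Proof.
  destruct p as [a b], q as [c d]. unfold dd; simpl. intros H.
  pose proof (pow2_ge_0 (a - c)). pose proof (pow2_ge_0 (b - d)).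
  assert ((a-c)^2 = 0) by lra. assert ((b-d)^2 = 0) by lra.
  destruct (Req_dec a c) as [E1|E1]; [|exfalso; apply (pow_nonzero (a-c) 2); auto; lra].
  destruct (Req_dec b d) as [E2|E2]; [|exfalso; apply (pow_nonzero (b-d) 2); auto; lra].
  subst; auto.
Qed.

Lemma dd_pos p q : p <> q -> 0 < dd p q.
Proof. intros H. destruct (dd_ge0 p q) as [H'|H']; auto. symmetry in H'. apply dd_zero in H'. tauto. Qed.

Lemma neq_fst (p q : C2) : fst p <> fst q -> p <> q.
Proof. intros H E. subst. auto. Qed.

Section Kconst.
Variable F : C2 -> C2.
Variable q : C2.
Hypothesis HCR : forall z1 z2 z3, z1 <> q -> z2 <> q -> z3 <> q -> z1 <> z2 -> z1 <> z3 -> z2 <> z3 ->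
  dd (F z1) (F z3) * dd z1 q * dd z2 z3 = dd z1 z3 * dd z2 q * dd (F z2) (F z3).
Hypothesis Hinj : forall z u, z <> q -> u <> q -> F z = F u -> z = u.

Definition Kf z w := dd (F z) (F w) * dd z q * dd w q / dd z w.

Lemma Kf_sym z w : Kf z w = Kf w z.
Proof. unfold Kf. rewrite (dd_sym (F z) (F w)), (dd_sym z w). unfold Rdiv. ring. Qed.

Lemma Kf_step a b c : a <> q -> b <> q -> c <> q -> a <> c -> b <> c -> Kf a c = Kf b c.
Proof.
  intros Ha Hb Hc Hac Hbc. destruct (classic (a = b)) as [->|Hab]; auto.
  pose proof (HCR a b c Ha Hb Hc Hab Hac Hbc) as H.
  pose proof (dd_pos _ _ Hac). pose proof (dd_pos _ _ Hbc).
  unfold Kf. apply (Rmult_eq_reg_r (dd a c * dd b c)). 2: nra.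
  transitivity (dd (F a) (F c) * dd a q * dd b c * dd c q). field. lra.
  rewrite H. field. lra.
Qed.

Lemma Kconst : exists k, 0 < k /\ forall z u, z <> q -> u <> q ->
  dd (F z) (F u) * (dd z q * dd u q) = k * dd z u.
Proof.
  set (r1 := (fst q + 1, snd q)). set (r2 := (fst q + 2, snd q)).
  assert (H1 : r1 <> q) by (apply neq_fst; simpl; lra).
  assert (H2 : r2 <> q) by (apply neq_fst; simpl; lra).
  assert (H12 : r1 <> r2) by (apply neq_fst; simpl; lra).
  exists (Kf r1 r2). split.
  - unfold Kf. assert (F r1 <> F r2) by (intro E; apply H12; apply Hinj; auto).
    pose proof (dd_pos _ _ H). pose proof (dd_pos _ _ H1). pose proof (dd_pos _ _ H2). pose proof (dd_pos _ _ H12).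
    apply Rdiv_lt_0_compat; auto. repeat apply Rmult_lt_0_compat; auto.
  - intros z u Hz Hu. destruct (classic (z = u)) as [->|Hzu].
    + rewrite !dd_refl. ring.
    + set (v := (Rabs (fst u) + Rabs (fst q) + 3, snd q)).
      pose proof (Rle_abs (fst u)) as A1. pose proof (Rle_abs (fst q)) as A2.
      pose proof (Rabs_pos (fst u)) as A3. pose proof (Rabs_pos (fst q)) as A4.
      assert (Hv : v <> q) by (apply neq_fst; simpl; lra).
      assert (Hvu : v <> u) by (apply neq_fst; simpl; lra).
      assert (Hv1 : v <> r1) by (apply neq_fst; simpl; lra).
      assert (E : Kf z u = Kf r1 r2).
      { rewrite (Kf_step z v u); auto. rewrite Kf_sym.
        rewrite (Kf_step u r1 v); auto. rewrite Kf_sym.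
        rewrite (Kf_step v r2 r1); auto. apply Kf_sym.
        all: try (intro E; apply Hvu; auto; fail); try (intro E; apply Hv1; auto; fail); try (intro E; apply H12; auto; fail). }
      rewrite <- E. unfold Kf. pose proof (dd_pos _ _ Hzu). field. lra.
Qed.
End Kconst.

Definition sig_inv (q a : C2) : C2 :=
  (fst q + (fst a - fst q) / dd a q, snd q + (snd a - snd q) / dd a q).

Lemma sig_dd_q q a : a <> q -> dd (sig_inv q a) q = / dd a q.
Proof.
  intros H. pose proof (dd_pos _ _ H) as P. destruct a as [a1 a2], q as [q1 q2].
  unfold sig_inv, dd in *; simpl in *. field. lra.
Qed.

Lemma sig_neq q a : a <> q -> sig_inv q a <> q.
Proof.
  intros H E. pose proof (sig_dd_q q a H). rewrite E, dd_refl in H0.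
  pose proof (dd_pos _ _ H). assert (/ dd a q > 0) by (apply Rinv_0_lt_compat; lra). lra.
Qed.

Lemma sig_dd q a b : a <> q -> b <> q ->
  dd (sig_inv q a) (sig_inv q b) = dd a b / (dd a q * dd b q).
Proof.
  intros Ha Hb. pose proof (dd_pos _ _ Ha) as Pa. pose proof (dd_pos _ _ Hb) as Pb.
  destruct a as [a1 a2], b as [b1 b2], q as [q1 q2].
  unfold sig_inv, dd in *; simpl in *. field. lra.
Qed.

Lemma sig_invol q a : a <> q -> sig_inv q (sig_inv q a) = a.
Proof.
  intros H. pose proof (sig_dd_q q a H) as E.
  pose proof (dd_pos _ _ H) as P.
  unfold sig_inv at 1. rewrite E. destruct a as [a1 a2], q as [q1 q2].
  unfold sig_inv, dd in *; simpl in *. f_equal; field; lra.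
Qed.

Lemma solve2 m11 m12 m21 m22 mu x1 x2 y1 y2 : 0 < mu ->
  m11^2 + m21^2 = mu -> m12^2 + m22^2 = mu -> m11*m12 + m21*m22 = 0 ->
  y1*m11 + y2*m21 = mu*x1 -> y1*m12 + y2*m22 = mu*x2 ->
  y1 = x1*m11 + x2*m12 /\ y2 = x1*m21 + x2*m22.
Proof.
  intros Hmu N1 N2 O A B.
  set (det := m11*m22 - m12*m21).
  assert (Hd : det^2 = mu^2).
  { transitivity ((m11^2 + m21^2)*(m12^2+m22^2) - (m11*m12 + m21*m22)^2). unfold det; ring.
    rewrite N1, N2, O. ring. }
  assert (Hd0 : det <> 0). { intro E. rewrite E in Hd. assert (mu^2 > 0) by nra. lra. }
  assert (E1 : (y1 - x1*m11 - x2*m12) * det =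
     m22 * (y1*m11 + y2*m21 - mu*x1) - m21 * (y1*m12 + y2*m22 - mu*x2)
     + x1 * (- m22 * (m11^2 + m21^2 - mu) + m21 * (m11*m12 + m21*m22))
     + x2 * (m21 * (m12^2 + m22^2 - mu) - m22 * (m11*m12 + m21*m22))) by (unfold det; ring).
  assert (E2 : (y2 - x1*m21 - x2*m22) * det =
     m11 * (y1*m12 + y2*m22 - mu*x2) - m12 * (y1*m11 + y2*m21 - mu*x1)
     + x1 * (m12 * (m11^2 + m21^2 - mu) - m11 * (m11*m12 + m21*m22))
     + x2 * (- m11 * (m12^2 + m22^2 - mu) + m12 * (m11*m12 + m21*m22))) by (unfold det; ring).
  rewrite A, B, N1, N2, O in E1, E2.
  replace (mu*x1 - mu*x1) with 0 in E1, E2 by ring.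
  replace (mu*x2 - mu*x2) with 0 in E1, E2 by ring.
  replace (mu - mu) with 0 in E1, E2 by ring.
  assert (Z1 : (y1 - x1*m11 - x2*m12) * det = 0) by (rewrite E1; ring).
  assert (Z2 : (y2 - x1*m21 - x2*m22) * det = 0) by (rewrite E2; ring).
  apply Rmult_integral in Z1. apply Rmult_integral in Z2.
  destruct Z1 as [Z1|Z1]; [|tauto]. destruct Z2 as [Z2|Z2]; [|tauto]. split; lra.
Qed.

Definition Mx (m11 m12 m21 m22 : R) (p : C2) : C2 :=
  (m11 * fst p + m12 * snd p, m21 * fst p + m22 * snd p).

Definition orthm (mu m11 m12 m21 m22 : R) : Prop :=
  m11^2 + m21^2 = mu /\ m12^2 + m22^2 = mu /\ m11*m12 + m21*m22 = 0.

Lemma affine_sim (Dom : C2 -> Prop) (psi : C2 -> C2) mu P0 : 0 < mu ->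
  Dom P0 -> Dom (fst P0 + 1, snd P0) -> Dom (fst P0, snd P0 + 1) ->
  (forall a b, Dom a -> Dom b -> dd (psi a) (psi b) = mu * dd a b) ->
  exists m11 m12 m21 m22 b1 b2, orthm mu m11 m12 m21 m22 /\
    forall a, Dom a -> psi a = (b1 + fst (Mx m11 m12 m21 m22 a), b2 + snd (Mx m11 m12 m21 m22 a)).
Proof.
  intros Hmu D0 D1 D2 Hsim.
  set (P1 := (fst P0 + 1, snd P0)) in *. set (P2 := (fst P0, snd P0 + 1)) in *.
  set (m11 := fst (psi P1) - fst (psi P0)). set (m21 := snd (psi P1) - snd (psi P0)).
  set (m12 := fst (psi P2) - fst (psi P0)). set (m22 := snd (psi P2) - snd (psi P0)).
  assert (N1 : m11^2 + m21^2 = mu).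
  { pose proof (Hsim P1 P0 D1 D0) as H. unfold m11, m21. change (dd (psi P1) (psi P0) = mu). rewrite H. unfold dd, P1; cbn [fst snd]; ring. }
  assert (N2 : m12^2 + m22^2 = mu).
  { pose proof (Hsim P2 P0 D2 D0) as H. unfold m12, m22. change (dd (psi P2) (psi P0) = mu). rewrite H. unfold dd, P2; cbn [fst snd]; ring. }
  assert (O : m11*m12 + m21*m22 = 0).
  { pose proof (Hsim P1 P2 D1 D2) as H.
    assert (E : (m11 - m12)^2 + (m21 - m22)^2 = 2 * mu).
    { transitivity (dd (psi P1) (psi P2)). unfold m11, m12, m21, m22, dd. ring.
      rewrite H. unfold dd, P1, P2; cbn [fst snd]; ring. }
    assert (E2 : (m11 - m12)^2 + (m21 - m22)^2 = (m11^2 + m21^2) + (m12^2 + m22^2) - 2 * (m11*m12 + m21*m22)) by ring.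
    lra. }
  exists m11, m12, m21, m22,
    (fst (psi P0) - m11 * fst P0 - m12 * snd P0), (snd (psi P0) - m21 * fst P0 - m22 * snd P0).
  split. { repeat split; auto. }
  intros a Da.
  set (x1 := fst a - fst P0). set (x2 := snd a - snd P0).
  set (y1 := fst (psi a) - fst (psi P0)). set (y2 := snd (psi a) - snd (psi P0)).
  pose proof (Hsim a P0 Da D0) as H0. pose proof (Hsim a P1 Da D1) as H1. pose proof (Hsim a P2 Da D2) as H2.
  assert (A : y1*m11 + y2*m21 = mu*x1).
  { transitivity ((dd (psi a) (psi P0) + (m11^2 + m21^2) - dd (psi a) (psi P1)) / 2).
    unfold y1, y2, m11, m21, dd. field.
    rewrite H0, H1, N1. unfold dd, x1, P1; cbn [fst snd]. field. }
  assert (B : y1*m12 + y2*m22 = mu*x2).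
  { transitivity ((dd (psi a) (psi P0) + (m12^2 + m22^2) - dd (psi a) (psi P2)) / 2).
    unfold y1, y2, m12, m22, dd. field.
    rewrite H0, H2, N2. unfold dd, x2, P2; cbn [fst snd]. field. }
  destruct (solve2 m11 m12 m21 m22 mu x1 x2 y1 y2 Hmu N1 N2 O A B) as [S1 S2].
  unfold Mx; simpl. destruct (psi a) as [pa1 pa2] eqn:Epa. simpl in *.
  unfold y1, y2, x1, x2 in *. f_equal; lra.
Qed.

Lemma qf (p r s p' r' s' mu : R) : 0 < p -> 0 < s -> 0 < mu ->
  (forall x y, (p*x^2 + 2*r*x*y + s*y^2) * (p'*x^2 + 2*r'*x*y + s'*y^2) = mu * (x^2+y^2)^2) ->
  r = 0 /\ p = s.
Proof.
  intros Hp Hs Hmu H.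
  pose proof (H 1 0) as E10. pose proof (H 0 1) as E01. pose proof (H 1 1) as E11.
  pose proof (H 1 (-1)) as E1m. pose proof (H 1 2) as E12.
  ring_simplify in E10. ring_simplify in E01. ring_simplify in E11. ring_simplify in E1m. ring_simplify in E12.
  assert (C4 : p * p' = mu) by lra.
  assert (C0 : s * s' = mu) by lra.
  assert (C2 : p*s' + s*p' + 4*r*r' = 2*mu) by lra.
  assert (C3 : p*r' + r*p' = 0) by lra.
  assert (C1 : r*s' + s*r' = 0) by lra.
  assert (Hp' : p' = mu / p) by (rewrite <- C4; field; lra).
  assert (Hs' : s' = mu / s) by (rewrite <- C0; field; lra).
  assert (R1 : r' = - r * mu / p^2).
  { apply (Rmult_eq_reg_l p); [|lra]. transitivity (- (r * p')). lra. rewrite Hp'. field. lra. }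
  assert (R2 : r' = - r * mu / s^2).
  { apply (Rmult_eq_reg_l s); [|lra]. transitivity (- (r * s')). lra. rewrite Hs'. field. lra. }
  assert (K : r * (s^2 - p^2) = 0).
  { assert (E : r * mu / p^2 = r * mu / s^2) by (rewrite R1 in R2; lra).
    apply (Rmult_eq_reg_r (mu / (p^2 * s^2))). 2: { apply Rgt_not_eq. apply Rdiv_lt_0_compat; [lra|]; apply Rmult_lt_0_compat; try apply pow_lt; lra. }
    rewrite Rmult_0_l. transitivity (r * mu / p^2 - r * mu / s^2). field; lra. lra. }
  apply Rmult_integral in K. destruct K as [K|K].
  - subst r. split; auto.
    assert (R0 : r' = 0) by (rewrite R1; field; lra). subst r'.
    rewrite Hp', Hs' in C2.
    assert (E : (p - s)^2 = 0).
    { apply (Rmult_eq_reg_r (mu / (p * s))). 2: { apply Rgt_not_eq. apply Rdiv_lt_0_compat; [lra|]; apply Rmult_lt_0_compat; try apply pow_lt; lra. }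
      rewrite Rmult_0_l. transitivity (p * (mu/s) + s * (mu/p) + 4 * 0 * 0 - 2 * mu). field; lra. lra. }
    destruct (Req_dec p s) as [|Hne]; auto. exfalso. apply (pow_nonzero (p - s) 2); [lra|auto].
  - assert (Eps : p = s).
    { assert ((s - p) * (s + p) = 0) by (rewrite <- K; ring). apply Rmult_integral in H0. lra. }
    subst s. split; auto.
    rewrite Hp', Hs', R1 in C2.
    assert (E : r^2 * mu / p^2 = 0).
    { transitivity (- (p * (mu/p) + p * (mu/p) + 4 * r * (- r * mu / p^2) - 2 * mu) / 4). field; lra. lra. }
    destruct (Req_dec r 0) as [|Hne]; auto. exfalso.
    assert (0 < r^2 * mu / p^2). { apply Rdiv_lt_0_compat; [|nra]. apply Rmult_lt_0_compat; auto. pose proof (pow_nonzero r 2 Hne). pose proof (pow2_ge_0 r). lra. }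
    lra.
Qed.

Lemma nL_pos a b c d v1 v2 : a*d - b*c <> 0 -> (v1 <> 0 \/ v2 <> 0) ->
  0 < (a*v1 + b*v2)^2 + (c*v1 + d*v2)^2.
Proof.
  intros Hd Hv.
  destruct (Req_dec (a*v1 + b*v2) 0) as [E1|E1]; destruct (Req_dec (c*v1 + d*v2) 0) as [E2|E2].
  - exfalso. assert (Z1 : (a*d - b*c) * v1 = 0) by (transitivity (d*(a*v1+b*v2) - b*(c*v1+d*v2)); [ring|rewrite E1, E2; ring]).
    assert (Z2 : (a*d - b*c) * v2 = 0) by (transitivity (a*(c*v1+d*v2) - c*(a*v1+b*v2)); [ring|rewrite E1, E2; ring]).
    apply Rmult_integral in Z1; apply Rmult_integral in Z2. tauto.
  - pose proof (pow2_ge_0 (a*v1+b*v2)). pose proof (pow_nonzero _ 2 E2). pose proof (pow2_ge_0 (c*v1+d*v2)). lra.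
  - pose proof (pow2_ge_0 (c*v1+d*v2)). pose proof (pow_nonzero _ 2 E1). pose proof (pow2_ge_0 (a*v1+b*v2)). lra.
  - pose proof (pow2_ge_0 (c*v1+d*v2)). pose proof (pow_nonzero _ 2 E1). pose proof (pow2_ge_0 (a*v1+b*v2)). lra.
Qed.

Lemma n_pos v1 v2 : (v1 <> 0 \/ v2 <> 0) -> 0 < v1^2 + v2^2.
Proof.
  intros [H|H]; pose proof (pow_nonzero _ 2 H); pose proof (pow2_ge_0 v1); pose proof (pow2_ge_0 v2); lra.
Qed.

Section RelCore.
Variables a b c d e f m11 m12 m21 m22 m11' m12' m21' m22' mu2 X1 X2 Y1 Y2 : R.
Hypothesis Hdet : a*d - b*c <> 0.
Hypothesis Horth : orthm mu2 m11' m12' m21' m22'.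
Let nn v1 v2 := v1^2 + v2^2.
Let l1 v1 v2 := a*v1 + b*v2.
Let l2 v1 v2 := c*v1 + d*v2.
Let nL v1 v2 := l1 v1 v2 ^2 + l2 v1 v2 ^2.
Hypothesis Heq : forall v1 v2, (v1 <> 0 \/ v2 <> 0) ->
  a * (X1 + (m11*v1 + m12*v2) / nn v1 v2) + b * (X2 + (m21*v1 + m22*v2) / nn v1 v2) + e
    = Y1 + (m11' * l1 v1 v2 + m12' * l2 v1 v2) / nL v1 v2 /\
  c * (X1 + (m11*v1 + m12*v2) / nn v1 v2) + d * (X2 + (m21*v1 + m22*v2) / nn v1 v2) + f
    = Y2 + (m21' * l1 v1 v2 + m22' * l2 v1 v2) / nL v1 v2.

Lemma rel_core v1 v2 :
  ((a*(m11*v1 + m12*v2) + b*(m21*v1 + m22*v2))^2 + (c*(m11*v1 + m12*v2) + d*(m21*v1 + m22*v2))^2)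
   * nL v1 v2 = mu2 * (nn v1 v2)^2.
Proof.
  destruct (classic (v1 <> 0 \/ v2 <> 0)) as [Hv|Hv].
  2: { assert (v1 = 0) by (destruct (Req_dec v1 0); tauto). assert (v2 = 0) by (destruct (Req_dec v2 0); tauto).
       subst. unfold nL, nn, l1, l2. ring. }
  destruct (Heq v1 v2 Hv) as [E1 E2].
  assert (Hv' : -v1 <> 0 \/ -v2 <> 0) by (destruct Hv; [left|right]; lra).
  destruct (Heq (-v1) (-v2) Hv') as [F1 F2].
  pose proof (n_pos v1 v2 Hv) as Pn. pose proof (nL_pos a b c d v1 v2 Hdet Hv) as PnL.
  fold (nn v1 v2) in Pn. fold (l1 v1 v2) (l2 v1 v2) in PnL. fold (nL v1 v2) in PnL.
  assert (Enn : nn (-v1) (-v2) = nn v1 v2) by (unfold nn; ring).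
  assert (El1 : l1 (-v1) (-v2) = - l1 v1 v2) by (unfold l1; ring).
  assert (El2 : l2 (-v1) (-v2) = - l2 v1 v2) by (unfold l2; ring).
  assert (EnL : nL (-v1) (-v2) = nL v1 v2) by (unfold nL; rewrite El1, El2; ring).
  rewrite Enn, El1, El2, EnL in F1, F2.
  set (W1 := m11*v1 + m12*v2) in *. set (W2 := m21*v1 + m22*v2) in *.
  set (N := nn v1 v2) in *. set (NL := nL v1 v2) in *. set (L1 := l1 v1 v2) in *. set (L2 := l2 v1 v2) in *.
  assert (G1 : (a * W1 + b * W2) / N = (m11' * L1 + m12' * L2) / NL).
  { replace (m11 * - v1 + m12 * - v2) with (- W1) in F1 by (unfold W1; ring).
    replace (m21 * - v1 + m22 * - v2) with (- W2) in F1 by (unfold W2; ring).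
    apply (Rmult_eq_reg_l 2); [|lra].
    transitivity ((a * (X1 + W1 / N) + b * (X2 + W2 / N) + e) - (a * (X1 + - W1 / N) + b * (X2 + - W2 / N) + e)).
    field; lra. rewrite E1, F1. field. lra. }
  assert (G2 : (c * W1 + d * W2) / N = (m21' * L1 + m22' * L2) / NL).
  { replace (m11 * - v1 + m12 * - v2) with (- W1) in F2 by (unfold W1; ring).
    replace (m21 * - v1 + m22 * - v2) with (- W2) in F2 by (unfold W2; ring).
    apply (Rmult_eq_reg_l 2); [|lra].
    transitivity ((c * (X1 + W1 / N) + d * (X2 + W2 / N) + f) - (c * (X1 + - W1 / N) + d * (X2 + - W2 / N) + f)).
    field; lra. rewrite E2, F2. field. lra. }
  destruct Horth as [O1 [O2 O3]].
  assert (NM : (m11' * L1 + m12' * L2)^2 + (m21' * L1 + m22' * L2)^2 = mu2 * NL).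
  { transitivity ((m11'^2 + m21'^2) * L1^2 + (m12'^2 + m22'^2) * L2^2 + 2 * (m11'*m12' + m21'*m22') * L1 * L2).
    ring. rewrite O1, O2, O3. unfold NL, nL. fold L1 L2. ring. }
  assert (H1 : a * W1 + b * W2 = N * ((m11' * L1 + m12' * L2) / NL)) by (rewrite <- G1; field; lra).
  assert (H2 : c * W1 + d * W2 = N * ((m21' * L1 + m22' * L2) / NL)) by (rewrite <- G2; field; lra).
  rewrite H1, H2.
  transitivity (N^2 * ((m11' * L1 + m12' * L2)^2 + (m21' * L1 + m22' * L2)^2) / NL). field. lra.
  rewrite NM. field. lra.
Qed.
End RelCore.

Definition Tm (a b c d e f : R) (p : C2) : C2 := (a * fst p + b * snd p + e, c * fst p + d * snd p + f).
Definition Tinv (a b c d e f : R) (p : C2) : C2 :=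
  ((d * (fst p - e) - b * (snd p - f)) / (a*d - b*c), (- c * (fst p - e) + a * (snd p - f)) / (a*d - b*c)).

Lemma Tm_Tinv a b c d e f p : a*d - b*c <> 0 -> Tm a b c d e f (Tinv a b c d e f p) = p.
Proof. intros H. destruct p as [x y]. unfold Tm, Tinv; simpl. f_equal; field; auto. Qed.

Lemma Tinv_Tm a b c d e f p : a*d - b*c <> 0 -> Tinv a b c d e f (Tm a b c d e f p) = p.
Proof. intros H. destruct p as [x y]. unfold Tm, Tinv; simpl. f_equal; field; auto. Qed.

Definition fin (z : S) : C2 := match z with Some w => w | None => (0,0) end.

Lemma D_main h a b c d e f : a*d - b*c <> 0 ->
  (forall x y, h (Some (x,y)) = Some (a*x+b*y+e, c*x+d*y+f)) -> h None = None ->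
  forall g1 g2 f1 f2, isometry g1 -> isometry g2 -> boundary_map g1 f1 -> boundary_map g2 f2 ->
  (forall z, f2 (h z) = h (f1 z)) ->
  forall q, f1 (Some q) = None -> (forall z u, f1 z = f1 u -> z = u) ->
  a^2 + c^2 = b^2 + d^2 /\ a*b + c*d = 0.
Proof.
  intros Hdet Hh HhN g1 g2 f1 f2 I1 I2 B1 B2 Hc q Hq Hinj.
  set (T := Tm a b c d e f).
  assert (HT : forall p, h (Some p) = Some (T p)) by (intros [x y]; apply Hh).
  set (Ti := Tinv a b c d e f).
  assert (HTTi : forall p, T (Ti p) = p) by (intros; apply Tm_Tinv; auto).
  assert (HTiT : forall p, Ti (T p) = p) by (intros; apply Tinv_Tm; auto).
  assert (Tinj : forall p p', T p = T p' -> p = p') by (intros p p' E; rewrite <- (HTiT p), <- (HTiT p'), E; auto).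
  set (F1 := fun z => fin (f1 (Some z))).
  assert (HF1 : forall z, z <> q -> f1 (Some z) = Some (F1 z)).
  { intros z Hz. unfold F1. destruct (f1 (Some z)) eqn:E; auto. exfalso. apply Hz.
    rewrite <- Hq in E. apply Hinj in E. congruence. }
  set (F2 := fun z => fin (f2 (Some z))).
  assert (HF2T : forall z, z <> q -> f2 (Some (T z)) = Some (T (F1 z))).
  { intros z Hz. rewrite <- HT, Hc, HF1, HT; auto. }
  assert (HF2T' : forall z, z <> q -> F2 (T z) = T (F1 z)).
  { intros z Hz. unfold F2 at 1. rewrite HF2T; auto. }
  assert (HF2 : forall z, z <> T q -> f2 (Some z) = Some (F2 z)).
  { intros z Hz. rewrite <- (HTTi z). rewrite HF2T, HF2T'; auto.
    intro E; apply Hz; rewrite <- E; auto. intro E; apply Hz; rewrite <- E; auto. }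
  assert (Hq2 : f2 (Some (T q)) = None).
  { transitivity (f2 (h (Some q))). rewrite HT; auto. rewrite Hc, Hq; auto. }
  assert (CR1 : forall z1 z2 z3, z1 <> q -> z2 <> q -> z3 <> q -> z1 <> z2 -> z1 <> z3 -> z2 <> z3 ->
    dd (F1 z1) (F1 z3) * dd z1 q * dd z2 z3 = dd z1 z3 * dd z2 q * dd (F1 z2) (F1 z3)).
  { intros. apply (cr_inf g1 f1); auto. }
  assert (Inj1 : forall z u, z <> q -> u <> q -> F1 z = F1 u -> z = u).
  { intros z u Hz Hu E. assert (f1 (Some z) = f1 (Some u)) by (rewrite !HF1, E; auto). apply Hinj in H. congruence. }
  destruct (Kconst F1 q CR1 Inj1) as [k1 [Hk1 K1]].
  assert (CR2 : forall z1 z2 z3, z1 <> T q -> z2 <> T q -> z3 <> T q -> z1 <> z2 -> z1 <> z3 -> z2 <> z3 ->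
    dd (F2 z1) (F2 z3) * dd z1 (T q) * dd z2 z3 = dd z1 z3 * dd z2 (T q) * dd (F2 z2) (F2 z3)).
  { intros. apply (cr_inf g2 f2); auto. }
  assert (Inj2 : forall z u, z <> T q -> u <> T q -> F2 z = F2 u -> z = u).
  { intros z u Hz Hu E.
    assert (Hz' : Ti z <> q) by (intro E'; apply Hz; rewrite <- E', HTTi; auto).
    assert (Hu' : Ti u <> q) by (intro E'; apply Hu; rewrite <- E', HTTi; auto).
    rewrite <- (HTTi z), <- (HTTi u) in E. rewrite !HF2T' in E; auto.
    apply Tinj in E. apply Inj1 in E; auto. rewrite <- (HTTi z), <- (HTTi u), E. auto. }
  destruct (Kconst F2 (T q) CR2 Inj2) as [k2 [Hk2 K2]].
  assert (Sim : forall (F : C2 -> C2) q0 k, (forall z u, z <> q0 -> u <> q0 -> dd (F z) (F u) * (dd z q0 * dd u q0) = k * dd z u) ->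
      forall x y, x <> q0 -> y <> q0 -> dd (F (sig_inv q0 x)) (F (sig_inv q0 y)) = k * dd x y).
  { intros F q0 k HK x y Hx Hy. pose proof (HK _ _ (sig_neq q0 x Hx) (sig_neq q0 y Hy)) as E.
    rewrite !sig_dd_q, sig_dd in E; auto.
    pose proof (dd_pos _ _ Hx). pose proof (dd_pos _ _ Hy).
    apply (Rmult_eq_reg_r (/ dd x q0 * / dd y q0)). 2: { apply Rgt_not_eq. apply Rmult_lt_0_compat; apply Rinv_0_lt_compat; lra. }
    rewrite E. field. lra. }
  assert (Aff : forall (F : C2 -> C2) q0 k, 0 < k -> (forall z u, z <> q0 -> u <> q0 -> dd (F z) (F u) * (dd z q0 * dd u q0) = k * dd z u) ->
     exists m11 m12 m21 m22 b1 b2, orthm k m11 m12 m21 m22 /\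
       forall z, z <> q0 -> F z = (b1 + fst (Mx m11 m12 m21 m22 (sig_inv q0 z)), b2 + snd (Mx m11 m12 m21 m22 (sig_inv q0 z)))).
  { intros F q0 k Hk HK.
    destruct (affine_sim (fun x => x <> q0) (fun x => F (sig_inv q0 x)) k (fst q0 + 1, snd q0 + 1) Hk)
      as [m11 [m12 [m21 [m22 [b1 [b2 [Ho Hf]]]]]]].
    - apply neq_fst; simpl; lra.
    - apply neq_fst; simpl; lra.
    - apply neq_fst; simpl; lra.
    - intros; apply Sim; auto.
    - exists m11, m12, m21, m22, b1, b2. split; auto. intros z Hz.
      rewrite <- (Hf _ (sig_neq q0 z Hz)). rewrite sig_invol; auto. }
  destruct (Aff F1 q k1 Hk1 K1) as [m11 [m12 [m21 [m22 [b1 [b2 [O1 A1]]]]]]].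
  destruct (Aff F2 (T q) k2 Hk2 K2) as [n11 [n12 [n21 [n22 [c1 [c2 [O2 A2]]]]]]].
  destruct q as [q1 q2].
  set (Tq1 := a*q1 + b*q2 + e). set (Tq2 := c*q1 + d*q2 + f).
  assert (Rel := rel_core a b c d e f m11 m12 m21 m22 n11 n12 n21 n22 k2
     (b1 + m11*q1 + m12*q2) (b2 + m21*q1 + m22*q2) (c1 + n11*Tq1 + n12*Tq2) (c2 + n21*Tq1 + n22*Tq2) Hdet O2).
  assert (Hrel : forall v1 v2, ((a*(m11*v1 + m12*v2) + b*(m21*v1 + m22*v2))^2 + (c*(m11*v1 + m12*v2) + d*(m21*v1 + m22*v2))^2)
     * ((a*v1 + b*v2)^2 + (c*v1 + d*v2)^2) = k2 * (v1^2 + v2^2)^2).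
  { apply Rel. intros v1 v2 Hv.
    set (z := (q1 + v1, q2 + v2)).
    assert (Hz : z <> (q1, q2)).
    { unfold z. intro E. injection E. intros. destruct Hv; lra. }
    assert (HTz : T z <> T (q1,q2)) by (intro E; apply Hz; apply Tinj; auto).
    pose proof (HF2T' z Hz) as E. rewrite (A1 z Hz), (A2 (T z) HTz) in E.
    pose proof (n_pos v1 v2 Hv) as Pn. pose proof (nL_pos a b c d v1 v2 Hdet Hv) as PnL.
    unfold sig_inv, Mx, T, Tm, dd, z in E. cbn [fst snd] in E.
    injection E. intros E2 E1. symmetry in E1, E2.
    replace (q1 + v1 - q1) with v1 in E1, E2 by ring. replace (q2 + v2 - q2) with v2 in E1, E2 by ring.
    replace (a * (q1 + v1) + b * (q2 + v2) + e - (a * q1 + b * q2 + e)) with (a*v1 + b*v2) in E1, E2 by ring.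
    replace (c * (q1 + v1) + d * (q2 + v2) + f - (c * q1 + d * q2 + f)) with (c*v1 + d*v2) in E1, E2 by ring.
    assert (N1 : v1 * (v1 * 1) + v2 * (v2 * 1) <> 0) by (replace (v1 * (v1 * 1) + v2 * (v2 * 1)) with (v1^2+v2^2) by ring; lra).
    assert (N2 : (a * v1 + b * v2) * ((a * v1 + b * v2) * 1) + (c * v1 + d * v2) * ((c * v1 + d * v2) * 1) <> 0) by (replace ((a * v1 + b * v2) * ((a * v1 + b * v2) * 1) + (c * v1 + d * v2) * ((c * v1 + d * v2) * 1)) with ((a*v1 + b*v2)^2 + (c*v1 + d*v2)^2) by ring; lra).
    assert (N3 : v1^2 + v2^2 <> 0) by lra.
    assert (N5 : v1 * v1 + v2 * v2 <> 0) by (replace (v1 * v1 + v2 * v2) with (v1^2+v2^2) by ring; lra).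
    assert (N4 : (a*v1 + b*v2)^2 + (c*v1 + d*v2)^2 <> 0) by lra.
    split.
    - match type of E1 with ?L = ?R => transitivity L; [|transitivity R; [exact E1|]] end;
        unfold Tq1, Tq2; field; repeat split; auto.
    - match type of E2 with ?L = ?R => transitivity L; [|transitivity R; [exact E2|]] end;
        unfold Tq1, Tq2; field; repeat split; auto. }
  set (A11 := a*m11 + b*m21). set (A12 := a*m12 + b*m22). set (A21 := c*m11 + d*m21). set (A22 := c*m12 + d*m22).
  assert (Hp : 0 < a^2 + c^2).
  { pose proof (nL_pos a b c d 1 0 Hdet ltac:(left; lra)). replace (a^2 + c^2) with ((a*1 + b*0)^2 + (c*1+d*0)^2) by ring. auto. }
  assert (Hs : 0 < b^2 + d^2).
  { pose proof (nL_pos a b c d 0 1 Hdet ltac:(right; lra)). replace (b^2 + d^2) with ((a*0 + b*1)^2 + (c*0+d*1)^2) by ring. auto. }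
  destruct (qf (a^2 + c^2) (a*b + c*d) (b^2 + d^2) (A11^2 + A21^2) (A11*A12 + A21*A22) (A12^2 + A22^2) k2 Hp Hs Hk2)
    as [Hr Hps].
  { intros x y. rewrite <- (Hrel x y). unfold A11, A12, A21, A22. ring. }
  split; lra.
Qed.

Lemma cdist_dd p q : cdist p q = sqrt (dd p q).
Proof. unfold cdist, cnorm, dd. simpl. reflexivity. Qed.

Lemma final_conformal h a b c d e f : a*d - b*c <> 0 ->
  (forall x y, h (Some (x,y)) = Some (a*x+b*y+e, c*x+d*y+f)) -> h None = None ->
  homeomorphism_S h ->
  a^2 + c^2 = b^2 + d^2 -> a*b + c*d = 0 -> conformal h.
Proof.
  intros Hdet Hh HhN Hhom S1 S2. split; auto.
  set (T := Tm a b c d e f). set (Ti := Tinv a b c d e f).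
  assert (HT : forall p, h (Some p) = Some (T p)) by (intros [x y]; apply Hh).
  assert (HTTi : forall p, T (Ti p) = p) by (intros; apply Tm_Tinv; auto).
  assert (HTiT : forall p, Ti (T p) = p) by (intros; apply Tinv_Tm; auto).
  set (rho := a^2 + c^2).
  assert (Hrho : 0 < rho).
  { unfold rho. pose proof (nL_pos a b c d 1 0 Hdet ltac:(left; lra)) as H.
    replace (a^2 + c^2) with ((a*1 + b*0)^2 + (c*1+d*0)^2) by ring. auto. }
  assert (Hdd : forall p p', dd (T p) (T p') = rho * dd p p').
  { intros [x y] [x' y']. unfold T, Tm, dd, rho; cbn [fst snd].
    transitivity ((a^2+c^2) * (x-x')^2 + 2*(a*b+c*d)*(x-x')*(y-y') + (b^2+d^2)*(y-y')^2). ring.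
    rewrite S2, <- S1. ring. }
  assert (Hcd : forall p p', cdist (T p) (T p') = sqrt rho * cdist p p').
  { intros. rewrite !cdist_dd, Hdd, sqrt_mult; auto. lra. apply dd_ge0. }
  assert (HN : forall z, h z = None -> z = None).
  { intros [p|] E; auto. rewrite HT in E. discriminate. }
  pose proof (sqrt_lt_R0 rho Hrho) as Hsr.
  intros A [[c0 [r [Hr HA]]]|[al [be [ga [Hab HA]]]]].
  - left. exists (T c0), (sqrt rho * r). split. apply Rmult_lt_0_compat; auto.
    intros w. split.
    + intros [z [Az Ez]]. apply HA in Az. destruct Az as [p [-> Hp]].
      exists (T p). rewrite HT in Ez. split; auto. rewrite Hcd, Hp. auto.
    + intros [p' [-> Hp']]. exists (Some (Ti p')). split.
      * apply HA. exists (Ti p'). split; auto.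
        rewrite <- (HTTi p') in Hp'. rewrite Hcd in Hp'.
        apply (Rmult_eq_reg_l (sqrt rho)); lra.
      * rewrite HT, HTTi. auto.
  - right. set (D := a*d - b*c).
    set (al' := (al*d - be*c)/D). set (be' := (be*a - al*b)/D). set (ga' := ga + al'*e + be'*f).
    exists al', be', ga'. split.
    + destruct (classic (al' = 0 /\ be' = 0)) as [[E1 E2]|Hn].
      * exfalso. unfold al', be' in *.
        assert (X1 : al*d - be*c = 0). { apply (Rmult_eq_reg_r (/D)). rewrite Rmult_0_l. exact E1. apply Rinv_neq_0_compat; auto. }
        assert (X2 : be*a - al*b = 0). { apply (Rmult_eq_reg_r (/D)). rewrite Rmult_0_l. exact E2. apply Rinv_neq_0_compat; auto. }
        assert (Y1 : al * D = 0) by (unfold D; transitivity (a*(al*d - be*c) + c*(be*a - al*b)); [ring| rewrite X1, X2; ring]).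
        assert (Y2 : be * D = 0) by (unfold D; transitivity (d*(be*a - al*b) + b*(al*d - be*c)); [ring| rewrite X1, X2; ring]).
        apply Rmult_integral in Y1; apply Rmult_integral in Y2. unfold D in *. destruct Hab; tauto.
      * destruct (Req_dec al' 0) as [E0|E0]; [right|left; auto]. intro E1; apply Hn; auto.
    + assert (Key : forall p', al * fst (Ti p') + be * snd (Ti p') - ga = al' * fst p' + be' * snd p' - ga').
      { intros [x y]. unfold Ti, Tinv, ga', al', be'; cbn [fst snd]. fold D. field. auto. }
      intros w. split.
      * intros [z [Az Ez]]. apply HA in Az. destruct Az as [->|[p [-> Hp]]].
        -- left. rewrite <- Ez. auto.
        -- right. exists (T p). rewrite HT in Ez. split; auto.
           pose proof (Key (T p)) as K. rewrite HTiT in K. lra.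
      * intros [->|[p' [-> Hp']]].
        -- exists None. split; auto. apply HA. left; auto.
        -- exists (Some (Ti p')). split.
           ++ apply HA. right. exists (Ti p'). split; auto. pose proof (Key p'). lra.
           ++ rewrite HT, HTTi. auto.
Qed.

Definition hor (x : H3) : C2 := (hx x, hy x).
Definition pt (w : C2) (t : R) : H3 := mkH (fst w) (snd w) (exp t) (exp_pos t).
Definition p0 : H3 := pt (0,0) 0.

Lemma hor_pt w t : hor (pt w t) = w.
Proof. destruct w; reflexivity. Qed.
Lemma ht_pt w t : ht (pt w t) = exp t.
Proof. reflexivity. Qed.
Lemma ht_p0 : ht p0 = 1.
Proof. unfold p0. rewrite ht_pt. apply exp_0. Qed.

Lemma pt_eta x : x = pt (hor x) (ln (ht x)).
Proof. apply H3_eq; unfold pt, mkH, hor, hx, hy, ht; simpl; auto. rewrite exp_ln; auto. apply ht_pos. Qed.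

Lemma aa_hor p q : aa p q = dd (hor p) (hor q) + ht p ^2 + ht q ^2.
Proof. unfold aa, dd, hor; simpl. ring. Qed.

Lemma hcosh_hor p q : hcosh p q = 1 + (dd (hor p) (hor q) + (ht p - ht q)^2) / (2 * ht p * ht q).
Proof. unfold hcosh, dd, hor; simpl. reflexivity. Qed.

Lemma hor_eq_pt x y : hor x = hor y -> ht x = ht y -> x = y.
Proof. intros E1 E2. unfold hor in E1. injection E1. intros. apply H3_eq; auto. Qed.

Section Scale.
Variable g : H3 -> H3.
Variable lam : R.
Hypothesis Hg : isometry g.
Hypothesis Hs : forall x, ht (g x) = lam * ht x.

Lemma lam_pos : 0 < lam.
Proof. pose proof (Hs p0). rewrite ht_p0 in H. pose proof (ht_pos (g p0)). lra. Qed.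

Lemma hor_scale x y : dd (hor (g x)) (hor (g y)) = lam^2 * dd (hor x) (hor y).
Proof.
  pose proof (iso_aa g x y Hg) as E. rewrite !aa_hor, !Hs in E.
  pose proof (ht_pos x); pose proof (ht_pos y).
  apply (Rmult_eq_reg_r (ht x * ht y)). 2: nra.
  transitivity ((dd (hor (g x)) (hor (g y)) + (lam * ht x) ^ 2 + (lam * ht y) ^ 2) * (ht x * ht y) - lam^2 * (ht x^2 + ht y^2) * (ht x * ht y)). ring.
  rewrite E. ring.
Qed.

Lemma hor_det x y : hor x = hor y -> hor (g x) = hor (g y).
Proof.
  intros E. apply dd_zero. rewrite hor_scale, E, dd_refl. ring.
Qed.
End Scale.

Lemma scale_of g f : isometry g -> boundary_map g f -> f None = None ->
  forall x, ht (g x) = ht (g p0) * ht x.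
Proof.
  intros Hg Hf E x. pose proof (ht_ratio g f Hg Hf E x p0). rewrite ht_p0 in H. lra.
Qed.

Lemma fixpt (A : C2 -> C2) mu : 0 < mu -> mu <> 1 ->
  (forall w w', dd (A w) (A w') = mu * dd w w') -> exists c, A c = c.
Proof.
  intros Hmu Hm1 HA.
  destruct (affine_sim (fun _ => True) A mu (0,0) Hmu I I I (fun a b _ _ => HA a b))
    as [m11 [m12 [m21 [m22 [b1 [b2 [[O1 [O2 O3]] Hf]]]]]]].
  set (D := (1-m11)*(1-m22) - m12*m21).
  set (dl := m11*m22 - m12*m21).
  assert (Hdl : dl^2 = mu^2).
  { transitivity ((m11^2 + m21^2)*(m12^2+m22^2) - (m11*m12 + m21*m22)^2). unfold dl; ring. rewrite O1, O2, O3. ring. }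
  assert (HD : D <> 0).
  { assert (Q1 : (m22 - m11)^2 + (m12 + m21)^2 = 2*mu - 2*dl).
    { transitivity ((m11^2 + m21^2) + (m12^2+m22^2) - 2*dl). unfold dl; ring. rewrite O1, O2; ring. }
    assert (Q2 : (m22 + m11)^2 + (m12 - m21)^2 = 2*mu + 2*dl).
    { transitivity ((m11^2 + m21^2) + (m12^2+m22^2) + 2*dl). unfold dl; ring. rewrite O1, O2; ring. }
    assert (Hc : (dl - mu) * (dl + mu) = 0) by (transitivity (dl^2 - mu^2); [ring|lra]).
    apply Rmult_integral in Hc. destruct Hc as [Hc|Hc].
    - assert (dl = mu) by lra. rewrite H in Q1. replace (2*mu - 2*mu) with 0 in Q1 by ring.
      pose proof (pow2_ge_0 (m22 - m11)); pose proof (pow2_ge_0 (m12 + m21)).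
      assert (Z1 : (m22 - m11)^2 = 0) by lra. assert (Z2 : (m12 + m21)^2 = 0) by lra.
      assert (m22 = m11) by (destruct (Req_dec (m22 - m11) 0); [lra|exfalso; apply (pow_nonzero _ 2 H2); auto]).
      assert (m12 = - m21) by (destruct (Req_dec (m12 + m21) 0); [lra|exfalso; apply (pow_nonzero _ 2 H3); auto]).
      intro HD. unfold D in HD. rewrite H2, H3 in HD.
      assert (HD' : (1 - m11)^2 + m21^2 = 0) by (rewrite <- HD; ring).
      pose proof (pow2_ge_0 (1 - m11)); pose proof (pow2_ge_0 m21).
      assert (Y1 : (1 - m11)^2 = 0) by lra. assert (Y2 : m21^2 = 0) by lra.
      assert (m11 = 1) by (destruct (Req_dec (1 - m11) 0); [lra|exfalso; apply (pow_nonzero _ 2 H6); auto]).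
      assert (m21 = 0) by (destruct (Req_dec m21 0); [lra|exfalso; apply (pow_nonzero _ 2 H7); auto]).
      apply Hm1. rewrite <- O1. rewrite H6, H7. ring.
    - assert (dl = - mu) by lra. rewrite H in Q2. replace (2*mu + 2* - mu) with 0 in Q2 by ring.
      pose proof (pow2_ge_0 (m22 + m11)); pose proof (pow2_ge_0 (m12 - m21)).
      assert (Z1 : (m22 + m11)^2 = 0) by lra. assert (Z2 : (m12 - m21)^2 = 0) by lra.
      assert (m22 = - m11) by (destruct (Req_dec (m22 + m11) 0); [lra|exfalso; apply (pow_nonzero _ 2 H2); auto]).
      assert (m12 = m21) by (destruct (Req_dec (m12 - m21) 0); [lra|exfalso; apply (pow_nonzero _ 2 H3); auto]).
      intro HD. unfold D in HD. rewrite H2, H3 in HD. apply Hm1. rewrite <- O1.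
      transitivity (1 - ((1 - m11) * (1 - - m11) - m21 * m21)). ring. rewrite HD. ring. }
  exists ((b1*(1-m22) + m12*b2)/D, (b2*(1-m11) + m21*b1)/D).
  rewrite Hf; auto. unfold Mx; simpl. f_equal; unfold D in *; field; auto.
Qed.

Lemma abs_lt_sq x e : 0 < e -> x^2 < e^2 -> Rabs x < e.
Proof.
  intros He H. destruct (Rlt_le_dec (Rabs x) e) as [|Hl]; auto. exfalso.
  rewrite <- (pow2_abs x) in H. pose proof (Rabs_pos x). nra.
Qed.

Lemma coord_close p eps : 0 < eps -> exists e, 0 < e /\ forall q, hdist p q < e ->
  Rabs (ht q - ht p) < eps /\ Rabs (hx q - hx p) < eps /\ Rabs (hy q - hy p) < eps.
Proof.
  intros Heps. set (sp := ht p). assert (Hsp : 0 < sp) by apply ht_pos.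
  set (dl := Rmin (1/4) (eps^2 / (4 * sp^2))).
  assert (Hdl : 0 < dl). { unfold dl. apply Rmin_glb_lt. lra. apply Rdiv_lt_0_compat; nra. }
  assert (Hdl1 : dl <= 1/4) by apply Rmin_l.
  assert (Hdl2 : dl <= eps^2 / (4 * sp^2)) by apply Rmin_r.
  assert (Hdl3 : 4 * sp^2 * dl <= eps^2).
  { apply (Rmult_le_compat_l (4*sp^2)) in Hdl2; [|nra]. replace (4 * sp ^ 2 * (eps ^ 2 / (4 * sp ^ 2))) with (eps^2) in Hdl2 by (field; lra). lra. }
  exists (ln (1 + dl)). split. { rewrite <- ln_1. apply ln_increasing; lra. }
  intros q Hq. set (sq := ht q). assert (Hsq : 0 < sq) by apply ht_pos.
  assert (Hc : hcosh p q < 1 + dl).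
  { eapply Rle_lt_trans. apply hcosh_le_exp. rewrite <- (exp_ln (1 + dl)) by lra. apply exp_increasing; auto. }
  unfold hcosh in Hc. fold sp sq in Hc.
  set (Dx := hx p - hx q) in *. set (Dy := hy p - hy q) in *.
  assert (HD : Dx^2 + Dy^2 + (sp - sq)^2 < 2 * dl * sp * sq).
  { assert (H1 : (Dx ^ 2 + Dy ^ 2 + (sp - sq) ^ 2) / (2 * sp * sq) < dl) by lra.
    apply (Rmult_lt_compat_r (2*sp*sq)) in H1; [|nra].
    replace ((Dx ^ 2 + Dy ^ 2 + (sp - sq) ^ 2) / (2 * sp * sq) * (2 * sp * sq)) with (Dx ^ 2 + Dy ^ 2 + (sp - sq) ^ 2) in H1 by (field; lra).
    lra. }
  pose proof (pow2_ge_0 Dx); pose proof (pow2_ge_0 Dy); pose proof (pow2_ge_0 (sp - sq)).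
  assert (Hle : sq <= 2 * sp).
  { destruct (Rle_lt_dec sq (2*sp)) as [|Hlt]; auto. exfalso.
    assert (2 * dl * sp * sq <= sp * sq / 2) by nra.
    assert (sq^2/4 < (sp - sq)^2) by nra.
    nra. }
  assert (HD2 : Dx^2 + Dy^2 + (sp - sq)^2 < eps^2) by nra.
  repeat split; apply abs_lt_sq; auto.
  - replace ((ht q - ht p)^2) with ((sp - sq)^2) by (unfold sp, sq; ring). lra.
  - replace ((hx q - hx p)^2) with (Dx^2) by (unfold Dx; ring). lra.
  - replace ((hy q - hy p)^2) with (Dy^2) by (unfold Dy; ring). lra.
Qed.

Definition Ubox (n : nat) (q : H3) : Prop :=
  / INR (Datatypes.S n) < ht q /\ ht q < INR (Datatypes.S n) /\
  Rabs (hx q) < INR (Datatypes.S n) /\ Rabs (hy q) < INR (Datatypes.S n).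

Lemma Ubox_open n : hopen (Ubox n).
Proof.
  intros p [H1 [H2 [H3 H4]]].
  set (m := Rmin (Rmin (ht p - / INR (Datatypes.S n)) (INR (Datatypes.S n) - ht p))
                 (Rmin (INR (Datatypes.S n) - Rabs (hx p)) (INR (Datatypes.S n) - Rabs (hy p)))).
  assert (Hm : 0 < m) by (unfold m; repeat apply Rmin_glb_lt; lra).
  assert (m <= ht p - / INR (Datatypes.S n)) by (unfold m; eapply Rle_trans; [apply Rmin_l|apply Rmin_l]).
  assert (m <= INR (Datatypes.S n) - ht p) by (unfold m; eapply Rle_trans; [apply Rmin_l|apply Rmin_r]).
  assert (m <= INR (Datatypes.S n) - Rabs (hx p)) by (unfold m; eapply Rle_trans; [apply Rmin_r|apply Rmin_l]).
  assert (m <= INR (Datatypes.S n) - Rabs (hy p)) by (unfold m; eapply Rle_trans; [apply Rmin_r|apply Rmin_r]).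
  destruct (coord_close p m Hm) as [e [He Hc]]. exists e. split; auto.
  intros q Hq. destruct (Hc q Hq) as [A1 [A2 A3]].
  apply Rabs_def2 in A1. destruct A1 as [A1a A1b].
  pose proof (Rabs_triang (hx q - hx p) (hx p)) as T5. replace (hx q - hx p + hx p) with (hx q) in T5 by ring.
  pose proof (Rabs_triang (hy q - hy p) (hy p)) as T6. replace (hy q - hy p + hy p) with (hy q) in T6 by ring.
  unfold Ubox. repeat split; lra.
Qed.

Lemma Ubox_mono n m q : (n <= m)%nat -> Ubox n q -> Ubox m q.
Proof.
  intros Hnm [H1 [H2 [H3 H4]]].
  assert (L : INR (Datatypes.S n) <= INR (Datatypes.S m)) by (apply le_INR; lia).
  assert (P : 0 < INR (Datatypes.S n)) by (apply lt_0_INR; lia).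
  assert (L' : / INR (Datatypes.S m) <= / INR (Datatypes.S n)) by (apply Rinv_le_contravar; lra).
  unfold Ubox. repeat split; lra.
Qed.

Lemma Ubox_cover p : exists n, Ubox n p.
Proof.
  pose proof (ht_pos p).
  destruct (nat_unbounded (ht p + / ht p + Rabs (hx p) + Rabs (hy p))) as [n Hn].
  exists n. pose proof (Rabs_pos (hx p)); pose proof (Rabs_pos (hy p)).
  assert (Hi : 0 < / ht p) by (apply Rinv_0_lt_compat; auto).
  assert (INR n < INR (Datatypes.S n)) by (apply lt_INR; lia).
  assert (Hpos : 0 < INR (Datatypes.S n)) by lra.
  unfold Ubox. repeat split; try lra.
  rewrite <- (Rinv_inv (ht p)). apply Rinv_lt_contravar. nra. lra.
Qed.

Lemma list_max_bound (l : list nat) : exists M, forall i, In i l -> (i <= M)%nat.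
Proof.
  induction l as [|a l [M HM]]. exists 0%nat; intros i [].
  exists (Nat.max a M). intros i [->|Hi]. lia. specialize (HM i Hi). lia.
Qed.

Lemma K_bounded K : hcompact K -> exists N, 1 <= N /\ forall q, K q ->
  / N < ht q /\ ht q < N /\ Rabs (hx q) < N /\ Rabs (hy q) < N.
Proof.
  intros HK. destruct (HK nat Ubox Ubox_open (fun p _ => Ubox_cover p)) as [l Hl].
  destruct (list_max_bound l) as [M HM].
  exists (INR (Datatypes.S M)). split. { rewrite S_INR. pose proof (pos_INR M). lra. }
  intros q Kq. destruct (Hl q Kq) as [i [Hi Ui]]. apply (Ubox_mono i M) in Ui; auto.
Qed.

Lemma hdist_small e : 0 < e -> exists eta, 0 < eta /\ forall p q, hcosh p q < 1 + eta -> hdist p q < e.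
Proof.
  intros He. set (e' := Rmin e 1).
  assert (He' : 0 < e') by (unfold e'; apply Rmin_glb_lt; lra).
  assert (He1 : e' <= 1) by apply Rmin_r. assert (He2 : e' <= e) by apply Rmin_l.
  exists (e'^2/16). split. nra.
  intros p q Hpq. pose proof (hcosh_ge1 p q) as H1. set (u := hcosh p q) in *.
  assert (Hs : sqrt (u^2 - 1) <= e'/2).
  { rewrite <- (sqrt_pow2 (e'/2)) by lra. apply sqrt_le_1_alt.
    assert (A : u - 1 <= e'^2/16) by lra. assert (e'^2 <= 1) by nra. assert (B : u + 1 <= 3) by lra.
    assert (C : (u-1)*(u+1) <= (e'^2/16) * 3) by (apply Rmult_le_compat; lra).
    replace (u^2 - 1) with ((u-1)*(u+1)) by ring. replace ((e'/2)^2) with (e'^2/4) by field.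
    pose proof (pow2_ge_0 e'). lra. }
  unfold hdist. fold u.
  apply Rlt_le_trans with e'; auto.
  apply Rlt_trans with (ln (1 + e')).
  - apply ln_increasing. pose proof (sqrt_pos (u^2-1)). lra. nra.
  - pose proof (exp_ineq1 e' ltac:(lra)). rewrite <- (ln_exp e') at 2. apply ln_increasing; lra.
Qed.

Lemma iter_G (G : (H3 -> H3) -> Prop) g : G (fun p => p) ->
  (forall g1 g2, G g1 -> G g2 -> G (fun p => g1 (g2 p))) -> G g ->
  forall n, G (fun x => Nat.iter n g x).
Proof.
  intros Gid Gc Gg n. induction n as [|n IH].
  - simpl. exact Gid.
  - simpl. exact (Gc g _ Gg IH).
Qed.

Lemma no_all_fix G : nice_lattice G ->
  (forall g, G g -> exists f, boundary_map g f) ->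
  (forall g f, G g -> boundary_map g f -> f None = None) -> False.
Proof.
  intros [Iso [Gid [Gcomp [Ginv [Gfree [Gpd [K [HK Hcov]]]]]]]] BM Hfix.
  assert (Scale : forall g, G g -> forall x, ht (g x) = ht (g p0) * ht x).
  { intros g Gg. destruct (BM g Gg) as [f Hf]. exact (scale_of g f (Iso g Gg) Hf (Hfix g f Gg Hf)). }
  assert (HS : forall g, G g -> forall x y, dd (hor (g x)) (hor (g y)) = ht (g p0)^2 * dd (hor x) (hor y)).
  { intros g Gg. apply hor_scale; auto. }
  assert (HD : forall g, G g -> forall x y, hor x = hor y -> hor (g x) = hor (g y)).
  { intros g Gg. apply hor_det with (ht (g p0)); auto. }
  destruct (K_bounded K HK) as [N [HN1 HNK]].
  destruct (Hcov (pt (0,0) (ln (2*N*N)))) as [g [q [Gg [Kq Egq]]]].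
  set (lam := ht (g p0)).
  assert (Hlam : 1 < lam).
  { pose proof (Scale g Gg q) as E. rewrite Egq, ht_pt, exp_ln in E by nra. fold lam in E.
    destruct (HNK q Kq) as [_ [Hq _]]. pose proof (ht_pos q). nra. }
  destruct (fixpt (fun w => hor (g (pt w 0))) (lam^2)) as [c Hc].
  { nra. } { intro E. nra. }
  { intros w w'. rewrite HS, !hor_pt; auto. }
  cbv beta in Hc.
  assert (Hgc : forall x, hor x = c -> hor (g x) = c).
  { intros x Hx. rewrite <- Hc. apply HD; auto. rewrite hor_pt; auto. }
  assert (Huniq : forall c', hor (g (pt c' 0)) = c' -> c' = c).
  { intros c' Hc'. apply dd_zero.
    assert (E : dd c' c = lam^2 * dd c' c).
    { rewrite <- Hc' at 1. rewrite <- Hc at 1. rewrite HS, !hor_pt; auto. }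
    assert ((lam^2 - 1) * dd c' c = 0) by lra. apply Rmult_integral in H. destruct H; auto. nra. }
  destruct (classic (exists h, G h /\ exists x, h (g x) <> g (h x))) as [[h [Gh [x0 Hx0]]]|Hcomm].
  2: {
    assert (Hcm : forall h, G h -> forall x, h (g x) = g (h x)).
    { intros h Gh x. destruct (classic (h (g x) = g (h x))); auto. exfalso. apply Hcomm. eauto. }
    assert (Hhc : forall h, G h -> hor (h (pt c 0)) = c).
    { intros h Gh. apply Huniq. set (w := hor (h (pt c 0))).
      transitivity (hor (g (h (pt c 0)))).
      - apply HD; auto.
      - rewrite <- Hcm; auto. apply HD; auto. rewrite (Hgc (pt c 0)); [|apply hor_pt]. symmetry; apply hor_pt. }
    set (Bd := N^2 * ((N + Rabs (fst c))^2 + (N + Rabs (snd c))^2)).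
    set (B := Bd + 1).
    assert (HBd : 0 <= Bd) by (unfold Bd; pose proof (Rabs_pos (fst c)); pose proof (Rabs_pos (snd c)); nra).
    destruct (Hcov (pt (fst c + B, snd c) 0)) as [h [q' [Gh [Kq' Ehq]]]].
    pose proof (HS h Gh q' (pt c 0)) as E1. rewrite Hhc, Ehq, hor_pt, hor_pt in E1; auto.
    pose proof (Scale h Gh q') as E2. rewrite Ehq, ht_pt, exp_0 in E2.
    assert (Edd : dd (fst c + B, snd c) c = B^2) by (unfold dd; simpl; ring).
    rewrite Edd in E1.
    destruct (HNK q' Kq') as [Q1 [Q2 [Q3 Q4]]]. pose proof (ht_pos q').
    assert (Hb : dd (hor q') c <= (N + Rabs (fst c))^2 + (N + Rabs (snd c))^2).
    { unfold dd, hor; cbn [fst snd].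
      assert (Rabs (hx q' - fst c) <= N + Rabs (fst c)).
      { unfold Rminus. eapply Rle_trans. apply Rabs_triang. rewrite Rabs_Ropp. lra. }
      assert (Rabs (hy q' - snd c) <= N + Rabs (snd c)).
      { unfold Rminus. eapply Rle_trans. apply Rabs_triang. rewrite Rabs_Ropp. lra. }
      rewrite <- (pow2_abs (hx q' - fst c)), <- (pow2_abs (hy q' - snd c)).
      pose proof (Rabs_pos (hx q' - fst c)); pose proof (Rabs_pos (hy q' - snd c)).
      apply Rplus_le_compat; apply pow_incr; lra. }
    assert (E3 : B^2 * ht q'^2 = dd (hor q') c).
    { set (lh := ht (h p0)) in *. replace (B^2 * ht q'^2) with (lh^2 * dd (hor q') c * ht q'^2) by (rewrite E1; ring).
      replace (lh^2 * dd (hor q') c * ht q'^2) with ((lh * ht q')^2 * dd (hor q') c) by ring.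
      rewrite <- E2. ring. }
    assert (Hq2 : / N^2 < ht q'^2).
    { replace (/ N^2) with (/N * /N) by (field; lra). replace (ht q'^2) with (ht q' * ht q') by ring.
      assert (0 < / N) by (apply Rinv_0_lt_compat; lra). apply Rmult_le_0_lt_compat; lra. }
    assert (HB1 : 1 <= B) by (unfold B; lra).
    assert (B^2 * / N^2 < B^2 * ht q'^2) by (apply Rmult_lt_compat_l; nra).
    assert (B^2 < Bd).
    { unfold Bd. apply (Rmult_lt_reg_r (/ N^2)). apply Rinv_0_lt_compat; nra.
      replace (N ^ 2 * ((N + Rabs (fst c)) ^ 2 + (N + Rabs (snd c)) ^ 2) * / N ^ 2)
        with ((N + Rabs (fst c)) ^ 2 + (N + Rabs (snd c)) ^ 2) by (field; lra). lra. }
    unfold B in *. nra. }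
  destruct (Ginv g Gg) as [g' [Gg' [Hgg' Hg'g]]].
  destruct (Ginv h Gh) as [h' [Gh' [Hhh' Hh'h]]].
  set (e := fun x => h' (g' (h (g x)))).
  assert (Ge : G e) by (exact (Gcomp h' _ Gh' (Gcomp g' _ Gg' (Gcomp h g Gh Gg)))).
  assert (Enoid : forall y, e y <> y).
  { intros y Ey. pose proof (Gfree e y Ge Ey x0) as E0. unfold e in E0. apply Hx0.
    rewrite <- (Hgg' (h (g x0))). f_equal. rewrite <- (Hhh' (g' (h (g x0)))). f_equal. exact E0. }
  set (lg' := ht (g' p0)). set (lh := ht (h p0)). set (lh' := ht (h' p0)).
  assert (Elg : lg' * lam = 1).
  { pose proof (Scale g' Gg' (g p0)) as E. rewrite Hg'g, ht_p0 in E. fold lg' lam in E. lra. }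
  assert (Elh : lh' * lh = 1).
  { pose proof (Scale h' Gh' (h p0)) as E. rewrite Hh'h, ht_p0 in E. fold lh' lh in E. lra. }
  assert (Hte : forall x, ht (e x) = ht x).
  { intros x. unfold e. rewrite (Scale h' Gh'), (Scale g' Gg'), (Scale h Gh), (Scale g Gg).
    fold lg' lh lh' lam. transitivity ((lh' * lh) * (lg' * lam) * ht x). ring. rewrite Elg, Elh. ring. }
  assert (HSe : forall x y, dd (hor (e x)) (hor (e y)) = dd (hor x) (hor y)).
  { intros x y. rewrite (HS e Ge). rewrite Hte, ht_p0. ring. }
  set (y := pt c 0).
  set (w0 := hor (e y)).
  set (dl := dd w0 c).
  assert (Hdl : 0 < dl).
  { destruct (dd_ge0 w0 c) as [|E]; auto. exfalso. symmetry in E. apply dd_zero in E.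
    apply (Enoid y). apply hor_eq_pt. unfold w0 in E. rewrite E. unfold y. rewrite hor_pt. auto. apply Hte. }
  assert (Hg'c : forall z, hor z = c -> hor (g' z) = c).
  { intros z Hz. apply dd_zero.
    assert (E : dd (hor (g (g' z))) (hor (g y)) = lam^2 * dd (hor (g' z)) c).
    { rewrite HS; auto. }
    rewrite Hgg', Hz in E. rewrite (Hgc y) in E by (unfold y; apply hor_pt). rewrite dd_refl in E.
    assert (lam^2 > 0) by nra. destruct (Rmult_integral _ _ (eq_sym E)); [lra|auto]. }
  assert (HSg' : forall z, dd (hor (g' z)) c = lg'^2 * dd (hor z) c).
  { intros z. pose proof (HS g' Gg' z y) as E. rewrite (Hg'c y) in E by (unfold y; apply hor_pt).
    unfold y in E. rewrite hor_pt in E. exact E. }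
  assert (it_g : forall n z, hor z = c -> hor (Nat.iter n g z) = c /\ ht (Nat.iter n g z) = lam^n * ht z).
  { induction n as [|n IH]; intros z Hz. simpl. split; auto. ring.
    destruct (IH z Hz) as [A1 A2]. rewrite Nat.iter_succ. split. apply Hgc; auto. rewrite (Scale g Gg), A2. change (lam^(Datatypes.S n)) with (lam * lam^n). fold lam. ring. }
  assert (it_g' : forall n z, dd (hor (Nat.iter n g' z)) c = (lg'^2)^n * dd (hor z) c /\ ht (Nat.iter n g' z) = lg'^n * ht z).
  { induction n as [|n IH]; intros z. simpl. split; ring.
    destruct (IH z) as [A1 A2]. rewrite Nat.iter_succ. split. rewrite HSg', A1. change ((lg'^2)^(Datatypes.S n)) with (lg'^2 * (lg'^2)^n). ring. rewrite (Scale g' Gg'), A2. change (lg'^(Datatypes.S n)) with (lg' * lg'^n). fold lg'. ring. }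
  set (en := fun n x => Nat.iter n g' (e (Nat.iter n g x))).
  assert (Gen : forall n, G (en n)).
  { intros n. exact (Gcomp _ _ (iter_G G g' Gid Gcomp Gg' n) (Gcomp e _ Ge (iter_G G g Gid Gcomp Gg n))). }
  set (r := lg'^2).
  assert (Hlg : 0 < lg') by (unfold lg'; apply ht_pos).
  assert (Hr : 0 < r < 1).
  { unfold r. split. nra. assert (lg' < 1) by nra. nra. }
  assert (Val : forall n, hcosh y (en n y) = 1 + r^n * dl / 2).
  { intros n. unfold en.
    destruct (it_g n y ltac:(unfold y; apply hor_pt)) as [Z1 Z2].
    set (z1 := Nat.iter n g y) in *.
    assert (Z3 : hor (e z1) = w0).
    { apply dd_zero. unfold w0. rewrite HSe, Z1. unfold y. rewrite hor_pt. apply dd_refl. }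
    destruct (it_g' n (e z1)) as [Z4 Z5].
    rewrite Z3 in Z4. fold dl r in Z4. rewrite Hte, Z2 in Z5.
    assert (Hy : hor y = c) by apply hor_pt. assert (Hty : ht y = 1) by (unfold y; rewrite ht_pt; apply exp_0).
    rewrite hcosh_hor, Hy, Hty, dd_sym, Z4, Z5, Hty.
    replace (lg'^n * (lam^n * 1)) with ((lg' * lam)^n) by (rewrite Rpow_mult_distr; ring).
    rewrite Elg, pow1. field. }
  set (K' := fun p => p = y \/ exists n, p = en n y).
  assert (HK' : hcompact K').
  { intros I U HU Hcv.
    destruct (Hcv y (or_introl eq_refl)) as [i0 Hi0].
    destruct (HU i0 y Hi0) as [eps [Heps Hball]].
    destruct (hdist_small eps Heps) as [eta [Heta Hsmall]].
    assert (Hra : Rabs r < 1) by (rewrite Rabs_pos_eq; lra).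
    destruct (pow_lt_1_zero r Hra (2*eta/dl) ltac:(apply Rdiv_lt_0_compat; lra)) as [N0 HN0].
    assert (Hfar : forall n, (n >= N0)%nat -> U i0 (en n y)).
    { intros n Hn. apply Hball. apply Hsmall. rewrite Val.
      specialize (HN0 n Hn). rewrite Rabs_pos_eq in HN0 by (apply pow_le; lra).
      apply (Rmult_lt_compat_r (dl/2)) in HN0; [|lra].
      replace (2 * eta / dl * (dl / 2)) with eta in HN0 by (field; lra). lra. }
    assert (Hnear : forall M, exists l, forall n, (n < M)%nat -> exists i, In i l /\ U i (en n y)).
    { induction M as [|M [l Hl]].
      - exists nil. intros n Hn. lia.
      - destruct (Hcv (en M y) (or_intror (ex_intro _ M eq_refl))) as [iM HiM].
        exists (iM :: l). intros n Hn. destruct (Nat.eq_dec n M) as [->|Hne].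
        + exists iM. split; auto. left; auto.
        + destruct (Hl n ltac:(lia)) as [i [Hi Ui]]. exists i. split; auto. right; auto. }
    destruct (Hnear N0) as [l Hl].
    exists (i0 :: l). intros p [->|[n ->]].
    - exists i0. split; auto. left; auto.
    - destruct (Nat.le_gt_cases N0 n) as [Hn|Hn].
      + exists i0. split. left; auto. apply Hfar. lia.
      + destruct (Hl n Hn) as [i [Hi Ui]]. exists i. split; auto. right; auto. }
  destruct (Gpd K' HK') as [L HL].
  set (v := fun n => hcosh y (en n y)).
  assert (Hin : forall n, In (v n) (map (fun phi => hcosh y (phi y)) L)).
  { intros n. destruct (HL (en n) (Gen n)) as [phi [Hphi Eq]].
    - exists y. split. left; auto. right. exists n. auto.
    - unfold v. rewrite Eq. apply in_map_iff. exists phi. auto. }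
  assert (Hinj : forall n m, v n = v m -> n = m).
  { intros n m E. unfold v in E. rewrite !Val in E.
    assert (E' : r^n = r^m). { apply (Rmult_eq_reg_r (dl/2)); [|lra]. lra. }
    assert (Hdec : forall a b, (a < b)%nat -> r^b < r^a).
    { intros a b Hab. replace b with (a + (b - a))%nat by lia. rewrite pow_add.
      pose proof (pow_lt_1_compat r (b - a) ltac:(lra) ltac:(lia)) as [_ P].
      pose proof (pow_lt r a ltac:(lra)). nra. }
    destruct (Nat.lt_trichotomy n m) as [H|[H|H]]; auto.
    - specialize (Hdec _ _ H). lra.
    - specialize (Hdec _ _ H). lra. }
  assert (ND : NoDup (map v (seq 0 (Datatypes.S (length L))))).
  { apply NoDup_map_NoDup_ForallPairs. intros a b _ _ E. apply Hinj; auto. apply seq_NoDup. }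
  assert (INC : incl (map v (seq 0 (Datatypes.S (length L)))) (map (fun phi => hcosh y (phi y)) L)).
  { intros x Hx. apply in_map_iff in Hx. destruct Hx as [n [<- _]]. apply Hin. }
  pose proof (NoDup_incl_length ND INC) as Hlen.
  rewrite !length_map, length_seq in Hlen. lia.
Qed.

Lemma bmap_unique g f f' : boundary_map g f -> boundary_map g f' -> forall z, f z = f' z.
Proof.
  intros H H' z. destruct (seq_exists z) as [x Hx].
  eapply conv_bd_unique. apply (H _ _ Hx). apply (H' _ _ Hx).
Qed.

Theorem lemma1p5 (h : S -> S) :
  homeomorphism_S h ->
  h None = None ->
  (exists G1 G2 : (H3 -> H3) -> Prop,
      nice_lattice G1 /\ nice_lattice G2 /\ conj_lattices h G1 G2) ->
  real_affine_on_C h ->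
  conformal h.
Proof.
  intros Hhom HhN [G1 [G2 [NL1 [NL2 [Cj1 Cj2]]]]] [a [b [c [d [e [f [Hdet Hh]]]]]]].
  assert (BM1 : forall g, G1 g -> exists f, boundary_map g f).
  { intros g Gg. destruct (Cj1 g Gg) as [g2 [f1 [f2 [_ [Hf1 _]]]]]. eauto. }
  assert (Ex : exists g f0, G1 g /\ boundary_map g f0 /\ f0 None <> None).
  { apply NNPP. intro Hn. apply (no_all_fix G1 NL1 BM1).
    intros g f0 Gg Hf0. apply NNPP. intro Hne. apply Hn. eauto. }
  destruct Ex as [g1 [f0 [Gg1 [Hf0 Hf0N]]]].
  destruct (Cj1 g1 Gg1) as [g2 [f1 [f2 [Gg2 [Hf1 [Hf2 Hc]]]]]].
  assert (E10 : f1 None <> None) by (rewrite (bmap_unique g1 f1 f0 Hf1 Hf0); auto).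
  destruct NL1 as [Iso1 [_ [_ [Ginv1 _]]]].
  destruct NL2 as [Iso2 _].
  destruct (Ginv1 g1 Gg1) as [g1' [Gg1' [Hgg' Hg'g]]].
  destruct (BM1 g1' Gg1') as [f1' Hf1'].
  pose proof (bmap_inverse g1 g1' f1 f1' Hf1 Hf1' Hgg') as Inv1.
  pose proof (bmap_inverse g1' g1 f1' f1 Hf1' Hf1 Hg'g) as Inv2.
  destruct (f1' None) as [q|] eqn:Eq.
  2: { exfalso. apply E10. rewrite <- Eq at 1. apply Inv1. }
  assert (Hq : f1 (Some q) = None) by (rewrite <- Eq; apply Inv1).
  assert (Hinj : forall z u, f1 z = f1 u -> z = u).
  { intros z u E. rewrite <- (Inv2 z), <- (Inv2 u), E. auto. }
  destruct (D_main h a b c d e f Hdet Hh HhN g1 g2 f1 f2 (Iso1 g1 Gg1) (Iso2 g2 Gg2) Hf1 Hf2 Hc q Hq Hinj)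
    as [S1 S2].
  apply (final_conformal h a b c d e f); auto.
Qed.
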